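(* The radial part $\widetilde L$ of the sub-Laplacian $L$ on ${\rm AdS}^{15}(\mathbb{O})$ is given, in the coordinates $(r,\eta)$ with $r=\tanh^{-1}\rho$, by \[ \widetilde{L}=\frac{\partial^2}{\partial r^2}+(7\coth r+7\tanh r)\frac{\partial}{\partial r}+\tanh^2 r\left(\frac{\partial^2}{\partial \eta^2}+6\cot \eta\,\frac{\partial}{\partial \eta}\right). \] Here $r=\tanh^{-1}\rho$ is the Riemannian distance in $\mathbb{O}H^1$ from the origin $w=0$ to $w$.
   Context: Let $\mathbb{O}$ be the octonions, with real basis $e_0,\dots,e_7$ and norm $\|x\|^2=\sum_j x_j^2$ for $x=\sum_j x_je_j$. The multiplication is given by $e_0e_j=e_j$, $e_ie_0=e_i$, and for $i,j\ge1$, $e_ie_j=-\delta_{ij}e_0+\epsilon_{ijk}e_k$, where $\epsilon_{ijk}$ is totally antisymmetric and equals $1$ for $ijk=123,145,176,246,257,347,365$. The octonionic anti-de Sitter space is ${\rm AdS}^{15}(\mathbb{O})=\{(x,y)\in\mathbb{O}^2:\ \|x\|^2-\|y\|^2=-1\}$. It carries the pseudo-Riemannian metric of signature $(8,7)$ induced from $\mathbb{R}^{8,8}\cong\mathbb{O}^2$ with metric ${\rm d}x_0^2+\dots+{\rm d}x_7^2-{\rm d}y_0^2-\dots-{\rm d}y_7^2$. The octonionic hyperbolic space $\mathbb{O}H^1$ is identified with the open unit ball of $\mathbb{O}$, equipped with its octonionic hyperbolic metric. The map $\pi(x,y)=y^{-1}x$ is a pseudo-Riemannian submersion ${\rm AdS}^{15}(\mathbb{O})\to\mathbb{O}H^1$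 with totally geodesic fibers isometric to the round sphere $\mathbb{S}^7$ (the octonionic anti-de Sitter fibration). The sub-Laplacian $L$ is the horizontal lift to ${\rm AdS}^{15}(\mathbb{O})$ of the Laplace–Beltrami operator of $\mathbb{O}H^1$. Equivalently, $L=\square_{{\rm AdS}^{15}(\mathbb{O})}+\Delta_{\mathcal V}$, where $\square$ is the Laplace–Beltrami operator (d'Alembertian) of the pseudo-Riemannian metric and $\Delta_{\mathcal V}$ is the vertical Laplacian, identified with the Laplacian $\Delta_{\mathbb{S}^7}$ of the fiber. Cylindrical coordinates: let $p$ be the north pole of $\mathbb{S}^7$ (unit octonions), $Y_1,\dots,Y_7$ an orthonormal frame of $T_p\mathbb{S}^7$, and $\exp_p$ the Riemannian exponential map of $\mathbb{S}^7$ at $p$. Define \[ \psi(w,\theta)=\left(\frac{\exp_p(\sum_i\theta_iY_i)\,w}{\sqrt{1-\rho^2}},\ \frac{\exp_p(\sum_i\theta_iY_i)}{\sqrt{1-\rho^2}}\right), \] where $w\in\mathbb{O}$ with $\rho=\|w\|<1$, and $\theta\in\mathbb{R}^7$ with $\eta=\|\theta\|<\pi$. A function is radial cylindrical if, in these coordinates, it depends only on $(\rho,\eta)$. The radial part $\widetilde L$ of $L$ is the operator acting on smooth compactly supported functions $f$ of $(\rho,\eta)\in[0,1)\times[0,\pi)$ such that $L(f\circ\psi)=(\widetilde Lf)\circ\psi$. *)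

(* Defs.v *)
From Stdlib Require Import Reals Lra List Bool Arith ClassicalEpsilon.
Import ListNotations.
Open Scope R_scope.

Fixpoint rsum (n : nat) (f : nat -> R) : R :=
  match n with O => 0 | S m => rsum m f + f m end.

(* An octonion x = sum_j x_j e_j is represented by its coordinate function;
   only the indices 0..7 are meaningful. *)
Definition Oct := nat -> R.

Definition clean (x : Oct) : Oct := fun k => if (k <? 8)%nat then x k else 0.

Definition e0 : Oct := fun k => if Nat.eqb k 0 then 1 else 0.

Definition oscale (a : R) (x : Oct) : Oct := clean (fun k => a * x k).

Definition onorm2 (x : Oct) : R := rsum 8 (fun k => x k ^ 2).
Definition onorm (x : Oct) : R := sqrt (onorm2 x).
Definition oinner (x y : Oct) : R := rsum 8 (fun k => x k * y k).

(* the triples ijk with epsilon_{ijk} = 1 *)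
Definition eps_triples : list (nat * nat * nat) :=
  [(1,2,3); (1,4,5); (1,7,6); (2,4,6); (2,5,7); (3,4,7); (3,6,5)]%nat.

Definition eps_pos (i j k : nat) : bool :=
  existsb (fun t => match t with (a, b, c) =>
     (Nat.eqb i a && Nat.eqb j b && Nat.eqb k c)
  || (Nat.eqb i b && Nat.eqb j c && Nat.eqb k a)
  || (Nat.eqb i c && Nat.eqb j a && Nat.eqb k b) end) eps_triples.

Definition eps (i j k : nat) : R :=
  if eps_pos i j k then 1 else if eps_pos j i k then -1 else 0.

Definition kron (i j : nat) : R := if Nat.eqb i j then 1 else 0.

(* coefficient of e_k in the product e_i e_j (i,j,k in 0..7) *)
Definition mcoef (i j k : nat) : R :=
  if Nat.eqb i 0 then kron j k
  else if Nat.eqb j 0 then kron i k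
  else if Nat.eqb k 0 then - kron i j
  else eps i j k.

Definition omul (x y : Oct) : Oct :=
  clean (fun k => rsum 8 (fun i => rsum 8 (fun j => x i * y j * mcoef i j k))).

Definition oconj (x : Oct) : Oct :=
  clean (fun k => if Nat.eqb k 0 then x k else - x k).

Definition oinv (x : Oct) : Oct := oscale (/ onorm2 x) (oconj x).

(* the derivative of g at t (meaningful when g is differentiable at t) *)
Definition deriv (g : R -> R) (t : R) : R :=
  epsilon (inhabits 0) (fun l => derivable_pt_lim g t l).

Definition upd (x : Oct) (i : nat) (t : R) : Oct :=
  fun k => if Nat.eqb k i then x k + t else x k.

Definition d2 (i : nat) (H : Oct -> R) (x : Oct) : R :=
  deriv (fun t => deriv (fun s => H (upd (upd x i t) i s)) 0) 0.

Definition lapR8 (H : Oct -> R) (x : Oct) : R := rsum 8 (fun i => d2 i H x).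

(* R^{8,8} = O^2 with quadratic form |x|^2 - |y|^2 *)
Definition AdS (x y : Oct) : Prop := onorm2 x - onorm2 y = -1.

(* degree-0 homogeneous extension of a function on AdS^15(O) to a
   neighbourhood of AdS^15(O) in R^{8,8} *)
Definition homog (F : Oct -> Oct -> R) (x y : Oct) : R :=
  let s := / sqrt (onorm2 y - onorm2 x) in F (oscale s x) (oscale s y).

(* d'Alembertian (Laplace-Beltrami operator) of AdS^15(O) with the induced
   metric of signature (8,7): the flat d'Alembertian of R^{8,8}
   (sum_j d^2/dx_j^2 - sum_j d^2/dy_j^2) applied to the degree-0
   homogeneous extension, evaluated on AdS^15(O). *)
Definition dalembert (F : Oct -> Oct -> R) (x y : Oct) : R :=
  lapR8 (fun x' => homog F x' y) x - lapR8 (fun y' => homog F x y') y.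

(* Laplacian of the round sphere S^7 (unit octonions) at u, computed as the
   Euclidean Laplacian of the degree-0 homogeneous extension. *)
Definition lapS7 (h : Oct -> R) (u : Oct) : R :=
  lapR8 (fun v => h (oscale (/ onorm v) v)) u.

(* vertical Laplacian: the fiber of pi(x,y) = y^{-1} x through (x,y) is
   { (a (u w), a u) : u in S^7 }, with w = y^{-1} x, a = |y| = 1/sqrt(1-|w|^2);
   Delta_V is the Laplacian of S^7 in the fiber variable u, at u = y/|y|. *)
Definition vertlap (F : Oct -> Oct -> R) (x y : Oct) : R :=
  let w := omul (oinv y) x in
  let a := onorm y in
  lapS7 (fun u => F (oscale a (omul u w)) (oscale a u)) (oscale (/ a) y).

Definition subL (F : Oct -> Oct -> R) (x y : Oct) : R :=
  dalembert F x y + vertlap F x y.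

(* theta in R^7 is represented by its coordinates theta 1, ..., theta 7 *)
Definition thnorm (th : nat -> R) : R :=
  sqrt (rsum 7 (fun i => th (S i) ^ 2)).

Definition orthonormal_frame_at_e0 (Y : nat -> Oct) : Prop :=
  (forall i, (1 <= i <= 7)%nat -> Y i 0%nat = 0) /\
  (forall i j, (1 <= i <= 7)%nat -> (1 <= j <= 7)%nat ->
     oinner (Y i) (Y j) = kron i j).

Definition expS7 (Y : nat -> Oct) (th : nat -> R) : Oct :=
  let v : Oct := fun k => rsum 7 (fun i => th (S i) * Y (S i) k) in
  let eta := thnorm th in
  clean (fun k => cos eta * e0 k + (sin eta / eta) * v k).

Definition psi_x (Y : nat -> Oct) (w : Oct) (th : nat -> R) : Oct :=
  oscale (/ sqrt (1 - onorm2 w)) (omul (expS7 Y th) w).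
Definition psi_y (Y : nat -> Oct) (w : Oct) (th : nat -> R) : Oct :=
  oscale (/ sqrt (1 - onorm2 w)) (expS7 Y th).

Definition p1 (f : R -> R -> R) : R -> R -> R := fun a b => deriv (fun s => f s b) a.
Definition p2 (f : R -> R -> R) : R -> R -> R := fun a b => deriv (fun s => f a s) b.

Fixpoint iterp (ws : list bool) (f : R -> R -> R) : R -> R -> R :=
  match ws with nil => f | b :: ws' => (if b then p1 else p2) (iterp ws' f) end.

Definition cont2_at (g : R -> R -> R) (a b : R) : Prop :=
  forall e, 0 < e -> exists d, 0 < d /\ forall a' b',
    Rabs (a' - a) < d -> Rabs (b' - b) < d -> Rabs (g a' b' - g a b) < e.

Definition smooth_on (U : R -> R -> Prop) (f : R -> R -> R) : Prop :=
  forall ws a b, U a b ->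
    (exists l, derivable_pt_lim (fun s => iterp ws f s b) a l) /\
    (exists l, derivable_pt_lim (fun s => iterp ws f a s) b l) /\
    cont2_at (iterp ws f) a b.

(* Main.v *)
Require Import Defs.
From Stdlib Require Import Reals Lra Lia FunctionalExtensionality ClassicalEpsilon List.
From Coquelicot Require Import Coquelicot.
Open Scope R_scope.

Ltac ocbv := cbv beta iota zeta delta [rsum mcoef eps eps_pos List.existsb eps_triples kron Nat.eqb clean andb orb Nat.ltb Nat.leb omul oconj onorm2 oscale e0].
Definition omulE (a b : Oct) : Oct := fun k => match k with
  | 0%nat => a 0%nat * b 0%nat - a 1%nat * b 1%nat - a 2%nat * b 2%nat - a 3%nat * b 3%nat - a 4%nat * b 4%nat - a 5%nat * b 5%nat - a 6%nat * b 6%nat - a 7%nat * b 7%nat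
  | 1%nat => a 0%nat * b 1%nat + a 1%nat * b 0%nat + a 2%nat * b 3%nat - a 3%nat * b 2%nat + a 4%nat * b 5%nat - a 5%nat * b 4%nat - a 6%nat * b 7%nat + a 7%nat * b 6%nat
  | 2%nat => a 0%nat * b 2%nat - a 1%nat * b 3%nat + a 2%nat * b 0%nat + a 3%nat * b 1%nat + a 4%nat * b 6%nat + a 5%nat * b 7%nat - a 6%nat * b 4%nat - a 7%nat * b 5%nat
  | 3%nat => a 0%nat * b 3%nat + a 1%nat * b 2%nat - a 2%nat * b 1%nat + a 3%nat * b 0%nat + a 4%nat * b 7%nat - a 5%nat * b 6%nat + a 6%nat * b 5%nat - a 7%nat * b 4%nat
  | 4%nat => a 0%nat * b 4%nat - a 1%nat * b 5%nat - a 2%nat * b 6%nat - a 3%nat * b 7%nat + a 4%nat * b 0%nat + a 5%nat * b 1%nat + a 6%nat * b 2%nat + a 7%nat * b 3%nat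
  | 5%nat => a 0%nat * b 5%nat + a 1%nat * b 4%nat - a 2%nat * b 7%nat + a 3%nat * b 6%nat - a 4%nat * b 1%nat + a 5%nat * b 0%nat - a 6%nat * b 3%nat + a 7%nat * b 2%nat
  | 6%nat => a 0%nat * b 6%nat + a 1%nat * b 7%nat + a 2%nat * b 4%nat - a 3%nat * b 5%nat - a 4%nat * b 2%nat + a 5%nat * b 3%nat + a 6%nat * b 0%nat - a 7%nat * b 1%nat
  | 7%nat => a 0%nat * b 7%nat - a 1%nat * b 6%nat + a 2%nat * b 5%nat + a 3%nat * b 4%nat - a 4%nat * b 3%nat - a 5%nat * b 2%nat + a 6%nat * b 1%nat + a 7%nat * b 0%nat
  | _ => 0 end.
Lemma omul_E a b : omul a b = omulE a b.
Proof. apply functional_extensionality; intro k.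
 do 8 (destruct k as [|k]; [ocbv; cbv [omulE]; ring|]). reflexivity. Qed.
Lemma n2_mul a b : onorm2 (omul a b) = onorm2 a * onorm2 b.
Proof. rewrite omul_E. unfold onorm2. cbv [rsum omulE]. ring. Qed.
Lemma mul_conj_l a b : omul a (omul (oconj a) b) = oscale (onorm2 a) b.
Proof. rewrite !omul_E. apply functional_extensionality; intro k.
 do 8 (destruct k as [|k]; [cbv [omulE oconj oscale clean onorm2 rsum Nat.ltb Nat.leb Nat.eqb]; ring|]). reflexivity. Qed.

Lemma rsum_ext n f g : (forall i, (i < n)%nat -> f i = g i) -> rsum n f = rsum n g.
Proof. induction n; simpl; intros H; auto. rewrite IHn by (intros; apply H; lia). rewrite H by lia. auto. Qed.

Lemma rsum_plus n f g : rsum n (fun i => f i + g i) = rsum n f + rsum n g.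
Proof. induction n; simpl; [ring|]. rewrite IHn. ring. Qed.

Lemma rsum_minus n f g : rsum n (fun i => f i - g i) = rsum n f - rsum n g.
Proof. induction n; simpl; [ring|]. rewrite IHn. ring. Qed.

Lemma rsum_scal n c f : rsum n (fun i => c * f i) = c * rsum n f.
Proof. induction n; simpl; [ring|]. rewrite IHn. ring. Qed.

Lemma rsum_scal_r n c f : rsum n (fun i => f i * c) = rsum n f * c.
Proof. induction n; simpl; [ring|]. rewrite IHn. ring. Qed.

Lemma rsum_const n c : rsum n (fun _ => c) = INR n * c.
Proof. induction n; simpl rsum; [simpl; ring|]. rewrite IHn, S_INR. ring. Qed.

Lemma rsum_swap n m g : rsum n (fun k => rsum m (fun i => g i k)) = rsum m (fun i => rsum n (fun k => g i k)).
Proof. induction n.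
 - simpl. symmetry. transitivity (rsum m (fun _ => 0)). apply rsum_ext; auto. rewrite rsum_const; ring.
 - simpl. rewrite IHn. rewrite <- rsum_plus. reflexivity. Qed.

Lemma rsum_mul n m f g : rsum n f * rsum m g = rsum n (fun i => rsum m (fun j => f i * g j)).
Proof. induction n; simpl; [ring|]. rewrite <- IHn, (rsum_scal m (f n) g). ring. Qed.

Lemma rsum_kron n i g : (i < n)%nat -> rsum n (fun j => g j * kron i j) = g i.
Proof.
  induction n; intros H; [lia|]. simpl.
  destruct (Nat.eq_dec i n) as [->|Hne].
  - rewrite (rsum_ext n _ (fun _ => 0)).
    + rewrite rsum_const. unfold kron. rewrite Nat.eqb_refl. ring.
    + intros j Hj. unfold kron. destruct (Nat.eqb_spec n j); [lia|ring].
  - rewrite IHn by lia. unfold kron. destruct (Nat.eqb_spec i n); [lia|ring].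
Qed.

Lemma rsum_kron_l n i g : (i < n)%nat -> rsum n (fun j => kron i j * g j) = g i.
Proof. intros H. rewrite <- (rsum_kron n i g H). apply rsum_ext; intros; ring. Qed.

Lemma rsum_nonneg n f : (forall i, (i < n)%nat -> 0 <= f i) -> 0 <= rsum n f.
Proof. induction n; simpl; intros H; [lra|]. pose proof (H n ltac:(lia)). pose proof (IHn ltac:(intros; apply H; lia)). lra. Qed.

Lemma rsum_zero_each n f : (forall i, (i < n)%nat -> 0 <= f i) -> rsum n f = 0 -> forall i, (i < n)%nat -> f i = 0.
Proof.
  induction n; simpl; intros H E i Hi; [lia|].
  assert (A : 0 <= rsum n f) by (apply rsum_nonneg; intros; apply H; lia).
  assert (B : 0 <= f n) by (apply H; lia).
  destruct (Nat.eq_dec i n) as [->|Hne]; [lra|].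
  apply IHn; try lia; [intros; apply H; lia| lra].
Qed.

Lemma pow2_sqr_alt (x : R) : x ^ 2 = x * x.
Proof. ring. Qed.

Lemma kron_sq i j : kron i j ^ 2 = kron i j.
Proof. unfold kron. destruct (Nat.eqb i j); ring. Qed.

Lemma kron_sym i j : kron i j = kron j i.
Proof. unfold kron. rewrite Nat.eqb_sym. reflexivity. Qed.

Lemma orth_complete n (A : nat -> nat -> R) :
  (forall i j, (i < n)%nat -> (j < n)%nat -> rsum n (fun k => A i k * A j k) = kron i j) ->
  forall k l, (k < n)%nat -> (l < n)%nat -> rsum n (fun i => A i k * A i l) = kron k l.
Proof.
  intros O.
  set (P := fun k l => rsum n (fun i => A i k * A i l)).
  assert (S1 : rsum n (fun k => P k k) = INR n).
  { unfold P. rewrite rsum_swap. rewrite (rsum_ext n _ (fun _ => 1)).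
    - rewrite rsum_const; ring.
    - intros i Hi. rewrite O by auto. unfold kron; rewrite Nat.eqb_refl; auto. }
  assert (S2 : rsum n (fun k => rsum n (fun l => P k l ^ 2)) = INR n).
  { transitivity (rsum n (fun k => rsum n (fun l => rsum n (fun i => rsum n (fun j =>
        (A i k * A j k) * (A i l * A j l)))))).
    { apply rsum_ext; intros k Hk; apply rsum_ext; intros l Hl. unfold P.
      rewrite pow2_sqr_alt. rewrite rsum_mul. apply rsum_ext; intros i Hi; apply rsum_ext; intros j Hj. ring. }
    transitivity (rsum n (fun i => rsum n (fun j => rsum n (fun k => rsum n (fun l =>
        (A i k * A j k) * (A i l * A j l)))))).
    { set (X := fun i j k l => (A i k * A j k) * (A i l * A j l)).
      change (rsum n (fun k => rsum n (fun l => rsum n (fun i => rsum n (fun j => X i j k l)))) =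
              rsum n (fun i => rsum n (fun j => rsum n (fun k => rsum n (fun l => X i j k l))))).
      transitivity (rsum n (fun k => rsum n (fun i => rsum n (fun l => rsum n (fun j => X i j k l))))).
      { apply rsum_ext; intros k _. apply (rsum_swap n n (fun i l => rsum n (fun j => X i j k l))). }
      transitivity (rsum n (fun i => rsum n (fun k => rsum n (fun l => rsum n (fun j => X i j k l))))).
      { apply (rsum_swap n n (fun i k => rsum n (fun l => rsum n (fun j => X i j k l)))). }
      apply rsum_ext; intros i _.
      transitivity (rsum n (fun k => rsum n (fun j => rsum n (fun l => X i j k l)))).
      { apply rsum_ext; intros k _. apply (rsum_swap n n (fun j l => X i j k l)). }
      apply (rsum_swap n n (fun j k => rsum n (fun l => X i j k l))). }
    transitivity (rsum n (fun i => rsum n (fun j => kron i j))).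
    { apply rsum_ext; intros i Hi; apply rsum_ext; intros j Hj.
      rewrite <- kron_sq, pow2_sqr_alt. rewrite <- (O i j Hi Hj). rewrite rsum_mul. reflexivity. }
    rewrite (rsum_ext n _ (fun _ => 1)).
    - rewrite rsum_const; ring.
    - intros i Hi. rewrite <- (rsum_kron n i (fun _ => 1) Hi). apply rsum_ext; intros; ring. }
  assert (S3 : rsum n (fun k => rsum n (fun l => kron k l * P k l)) = INR n).
  { rewrite <- S1. apply rsum_ext; intros k Hk. apply rsum_kron_l; auto. }
  assert (S4 : rsum n (fun k => rsum n (fun l => kron k l ^ 2)) = INR n).
  { rewrite (rsum_ext n _ (fun _ => 1)).
    - rewrite rsum_const; ring.
    - intros k Hk. rewrite <- (rsum_kron_l n k (fun _ => 1) Hk). apply rsum_ext; intros. rewrite kron_sq; ring. }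
  assert (T : rsum n (fun k => rsum n (fun l => (kron k l - P k l) ^ 2)) = 0).
  { transitivity (rsum n (fun k => rsum n (fun l => kron k l ^ 2))
        - 2 * rsum n (fun k => rsum n (fun l => kron k l * P k l))
        + rsum n (fun k => rsum n (fun l => P k l ^ 2))).
    - rewrite <- rsum_scal, <- rsum_minus, <- rsum_plus. apply rsum_ext; intros k Hk.
      rewrite <- rsum_scal, <- rsum_minus, <- rsum_plus. apply rsum_ext; intros l Hl. ring.
    - rewrite S2, S3, S4. ring. }
  intros k l Hk Hl.
  assert (Z1 := rsum_zero_each n _ ltac:(intros; apply rsum_nonneg; intros; apply pow2_ge_0) T k Hk).
  assert (Z2 := rsum_zero_each n _ ltac:(intros; apply pow2_ge_0) Z1 l Hl).
  simpl in Z2. fold (P k l). nra.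
Qed.

Ltac kcases := let k := fresh "k" in apply functional_extensionality; intro k;
  do 8 (destruct k as [|k]; [cbv [omulE oconj oscale clean onorm2 rsum Nat.ltb Nat.leb Nat.eqb]; ring|]);
  reflexivity.

Lemma n2_clean x : onorm2 (clean x) = onorm2 x.
Proof. unfold onorm2. cbv [rsum clean Nat.ltb Nat.leb]. ring. Qed.
Lemma n2_scale a x : onorm2 (oscale a x) = a ^ 2 * onorm2 x.
Proof. unfold onorm2, oscale. cbv [rsum clean Nat.ltb Nat.leb]. ring. Qed.
Lemma n2_conj x : onorm2 (oconj x) = onorm2 x.
Proof. unfold onorm2, oconj. cbv [rsum clean Nat.ltb Nat.leb Nat.eqb]. ring. Qed.
Lemma omul_scale_r a c b : omul a (oscale c b) = oscale c (omul a b).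
Proof. rewrite !omul_E. kcases. Qed.
Lemma omul_clean_r a b : omul a (clean b) = omul a b.
Proof. rewrite !omul_E. kcases. Qed.
Lemma omul_clean_l a b : omul (clean a) b = omul a b.
Proof. rewrite !omul_E. kcases. Qed.
Lemma oscale_oscale a b x : oscale a (oscale b x) = oscale (a * b) x.
Proof. kcases. Qed.
Lemma oscale_1 x : oscale 1 x = clean x.
Proof. kcases. Qed.
Lemma n2_nonneg x : 0 <= onorm2 x.
Proof. unfold onorm2. cbv [rsum]. nra. Qed.
Lemma n2_oinv y : onorm2 y <> 0 -> onorm2 (oinv y) = / onorm2 y.
Proof. intros H. unfold oinv. rewrite n2_scale, n2_conj. field. auto. Qed.

Lemma rsum_shift n f : rsum (S n) f = f 0%nat + rsum n (fun i => f (S i)).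
Proof. induction n; simpl in *; [ring|]. rewrite IHn. ring. Qed.

Section Frame.
Variable Y : nat -> Oct.
Hypothesis HY : orthonormal_frame_at_e0 Y.

Definition Qv (i : nat) : Oct := if Nat.eqb i 0 then e0 else Y i.

Lemma e0_dot (z : Oct) : rsum 8 (fun k => e0 k * z k) = z 0%nat.
Proof. cbv [rsum e0 Nat.eqb]. ring. Qed.

Lemma Qv_orth i j : (i < 8)%nat -> (j < 8)%nat -> rsum 8 (fun k => Qv i k * Qv j k) = kron i j.
Proof.
  destruct HY as [H0 H1]. intros Hi Hj.
  destruct i as [|i]; destruct j as [|j];
  repeat change (Qv 0) with e0; repeat change (Qv (S i)) with (Y (S i));
  repeat change (Qv (S j)) with (Y (S j)).
  - cbv [rsum e0 kron Nat.eqb]. ring.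
  - rewrite e0_dot, H0 by lia. unfold kron; simpl; ring.
  - rewrite (rsum_ext _ _ (fun k => e0 k * Y (S i) k)) by (intros; ring).
    rewrite e0_dot, H0 by lia. unfold kron; simpl; ring.
  - apply H1; lia.
Qed.

Lemma frame_complete k l : (k < 8)%nat -> (l < 8)%nat ->
  rsum 7 (fun i => Y (S i) k * Y (S i) l) = kron k l - e0 k * e0 l.
Proof.
  intros Hk Hl. pose proof (orth_complete 8 Qv Qv_orth k l Hk Hl) as H.
  rewrite rsum_shift in H. change (Qv 0) with e0 in H.
  rewrite <- H. ring_simplify. apply rsum_ext. intros i _. reflexivity.
Qed.


Definition vv (th : nat -> R) : Oct := fun k => rsum 7 (fun i => th (S i) * Y (S i) k).

Lemma expS7_val th k : (k < 8)%nat ->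
  expS7 Y th k = cos (thnorm th) * e0 k + sin (thnorm th) / thnorm th * vv th k.
Proof. intros Hk. unfold expS7, clean. apply Nat.ltb_lt in Hk. rewrite Hk. reflexivity. Qed.

Lemma expS7_ge8 th k : (8 <= k)%nat -> expS7 Y th k = 0.
Proof. intros Hk. unfold expS7, clean. destruct (Nat.ltb_spec k 8); [lia|reflexivity]. Qed.

Lemma vv_0 th : vv th 0%nat = 0.
Proof. destruct HY as [H0 _]. unfold vv. transitivity (rsum 7 (fun _ => 0)).
  - apply rsum_ext; intros i Hi. rewrite H0 by lia. ring.
  - rewrite rsum_const; ring. Qed.

Lemma sum_vv2 th : rsum 8 (fun k => vv th k ^ 2) = rsum 7 (fun i => th (S i) ^ 2).
Proof.
  destruct HY as [_ H1].
  transitivity (rsum 8 (fun k => rsum 7 (fun i => rsum 7 (fun j => (th (S i) * th (S j)) * (Y (S i) k * Y (S j) k))))).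
  { apply rsum_ext; intros k _. unfold vv. rewrite pow2_sqr_alt, rsum_mul.
    apply rsum_ext; intros i _; apply rsum_ext; intros j _. ring. }
  rewrite (rsum_swap 8 7 (fun i k => rsum 7 (fun j => th (S i) * th (S j) * (Y (S i) k * Y (S j) k)))).
  apply rsum_ext; intros i Hi.
  rewrite (rsum_swap 8 7 (fun j k => th (S i) * th (S j) * (Y (S i) k * Y (S j) k))).
  transitivity (rsum 7 (fun j => (th (S i) * th (S j)) * kron i j)).
  - apply rsum_ext; intros j Hj. rewrite rsum_scal. f_equal.
    pose proof (H1 (S i) (S j) ltac:(lia) ltac:(lia)) as HH. unfold oinner in HH. rewrite HH. unfold kron. simpl. reflexivity.
  - rewrite (rsum_kron 7 i (fun j => th (S i) * th (S j)) Hi). ring.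
Qed.

Lemma thnorm_sq th : thnorm th ^ 2 = rsum 7 (fun i => th (S i) ^ 2).
Proof. unfold thnorm. rewrite pow2_sqr_alt, sqrt_sqrt; auto.
  apply rsum_nonneg; intros; apply pow2_ge_0. Qed.

Lemma rsum8_ext f g : (forall k, (k < 8)%nat -> f k = g k) -> rsum 8 f = rsum 8 g.
Proof. apply rsum_ext. Qed.

Lemma n2_expS7 th : 0 < thnorm th -> onorm2 (expS7 Y th) = 1.
Proof.
  intros Hp. set (c := cos (thnorm th)). set (s := sin (thnorm th) / thnorm th).
  unfold onorm2.
  transitivity (rsum 8 (fun k => c^2 * (e0 k * e0 k) + (2 * c * s) * (e0 k * vv th k) + s^2 * vv th k ^ 2)).
  { apply rsum_ext; intros k Hk. rewrite expS7_val by auto. fold c s. ring. }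
  rewrite !rsum_plus, !rsum_scal, !e0_dot, vv_0, sum_vv2, <- thnorm_sq.
  cbv [e0 Nat.eqb]. unfold s, c. pose proof (sin2_cos2 (thnorm th)). unfold Rsqr in H. replace ((sin (thnorm th) / thnorm th) ^ 2 * thnorm th ^ 2) with (sin (thnorm th) * sin (thnorm th)) by (field; lra). rewrite pow2_sqr_alt. lra.
Qed.

Lemma expS7_0 th : expS7 Y th 0%nat = cos (thnorm th).
Proof. rewrite expS7_val by lia. rewrite vv_0. cbv [e0 Nat.eqb]. ring. Qed.

Lemma expS7_inv (u : Oct) : onorm2 u = 1 -> -1 < u 0%nat < 1 ->
  exists th, thnorm th = acos (u 0%nat) /\ expS7 Y th = clean u.
Proof.
  intros Hn Hu.
  set (eta := acos (u 0%nat)).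
  assert (Heta : 0 < eta < PI) by (apply acos_bound_lt; auto).
  set (s := sin eta).
  assert (Hs2 : s ^ 2 = 1 - u 0%nat ^ 2).
  { unfold s, eta. rewrite sin_acos by lra. rewrite pow2_sqr_alt, sqrt_sqrt.
    - unfold Rsqr; ring.
    - unfold Rsqr; nra. }
  assert (Hs : 0 < s) by (apply sin_gt_0; lra).
  set (th := fun i => eta / s * oinner u (Y i)).
  assert (Sum : rsum 7 (fun i => oinner u (Y (S i)) ^ 2) = 1 - u 0%nat ^ 2).
  { transitivity (rsum 7 (fun i => rsum 8 (fun k => rsum 8 (fun l => (u k * u l) * (Y (S i) k * Y (S i) l))))).
    { apply rsum_ext; intros i _. unfold oinner. rewrite pow2_sqr_alt, rsum_mul.
      apply rsum_ext; intros k _; apply rsum_ext; intros l _. ring. }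
    rewrite <- (rsum_swap 8 7 (fun i k => rsum 8 (fun l => (u k * u l) * (Y (S i) k * Y (S i) l)))).
    transitivity (rsum 8 (fun k => rsum 8 (fun l => (u k * u l) * (kron k l - e0 k * e0 l)))).
    { apply rsum_ext; intros k Hk.
      rewrite <- (rsum_swap 8 7 (fun i l => (u k * u l) * (Y (S i) k * Y (S i) l))).
      apply rsum_ext; intros l Hl. rewrite rsum_scal. rewrite frame_complete by auto. reflexivity. }
    transitivity (rsum 8 (fun k => u k * u k - (u k * e0 k) * u 0%nat)).
    { apply rsum_ext; intros k Hk.
      transitivity (rsum 8 (fun l => (u k * u l) * kron k l) - (u k * e0 k) * rsum 8 (fun l => e0 l * u l)).
      - rewrite <- rsum_scal, <- rsum_minus. apply rsum_ext; intros; ring.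
      - rewrite e0_dot. rewrite (rsum_kron 8 k (fun l => u k * u l) Hk). reflexivity. }
    rewrite rsum_minus, rsum_scal_r.
    rewrite (rsum_ext 8 (fun k => u k * e0 k) (fun k => e0 k * u k)) by (intros; ring).
    rewrite e0_dot. unfold onorm2 in Hn. rewrite (rsum_ext 8 _ (fun k => u k ^ 2)) by (intros; ring).
    rewrite Hn. ring. }
  assert (Hth : thnorm th = eta).
  { unfold thnorm. unfold th.
    rewrite (rsum_ext 7 _ (fun i => (eta / s) ^ 2 * oinner u (Y (S i)) ^ 2)) by (intros; ring).
    rewrite rsum_scal, Sum, <- Hs2.
    replace ((eta / s) ^ 2 * s ^ 2) with (eta ^ 2) by (field; lra).
    rewrite pow2_sqr_alt. apply sqrt_square. lra. }
  exists th. split; [exact Hth|].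
  apply functional_extensionality; intro k.
  destruct (Nat.ltb_spec k 8) as [Hk|Hk].
  - rewrite expS7_val by auto. rewrite Hth. unfold clean. apply Nat.ltb_lt in Hk as Hk'. rewrite Hk'.
    assert (V : vv th k = eta / s * (u k - u 0%nat * e0 k)).
    { unfold vv, th.
      transitivity (eta / s * rsum 8 (fun l => u l * rsum 7 (fun i => Y (S i) l * Y (S i) k))).
      - set (G := fun i l => eta / s * (u l * (Y (S i) l * Y (S i) k))).
        transitivity (rsum 7 (fun i => rsum 8 (fun l => G i l))).
        { apply rsum_ext; intros i _. unfold oinner, G.
          rewrite <- rsum_scal, <- rsum_scal_r. apply rsum_ext; intros; ring. }
        rewrite <- (rsum_swap 8 7 G). rewrite <- rsum_scal. apply rsum_ext; intros l _.
        rewrite <- (rsum_scal 7 (u l)), <- (rsum_scal 7 (eta / s)). apply rsum_ext; intros; unfold G; ring.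
      - f_equal. transitivity (rsum 8 (fun l => u l * kron l k - (e0 l * u l) * e0 k)).
        + apply rsum_ext; intros l Hl. rewrite frame_complete by auto. ring.
        + rewrite rsum_minus, rsum_scal_r, e0_dot.
          rewrite (rsum_ext 8 _ (fun l => u l * kron k l)) by (intros; rewrite kron_sym; ring).
          rewrite (rsum_kron 8 k u Hk). ring. }
    rewrite V. unfold eta at 1. rewrite cos_acos by lra. fold s. field. lra.
  - rewrite expS7_ge8 by lia. unfold clean. destruct (Nat.ltb_spec k 8); [lia|reflexivity].
Qed.

End Frame.

Lemma deriv_eq g t l : derivable_pt_lim g t l -> deriv g t = l.
Proof.
  intro H. unfold deriv.
  assert (E : exists l0, derivable_pt_lim g t l0) by (exists l; exact H).
  pose proof (epsilon_spec (inhabits 0) _ E) as H2.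
  exact (uniqueness_limite _ _ _ _ H2 H).
Qed.

Lemma dpl_local g1 g2 t l d : 0 < d ->
  (forall t', Rabs (t' - t) < d -> g1 t' = g2 t') ->
  derivable_pt_lim g1 t l -> derivable_pt_lim g2 t l.
Proof.
  intros Hd Heq H eps Heps.
  destruct (H eps Heps) as [del Hdel].
  assert (Hm : 0 < Rmin del d) by (apply Rmin_pos; [apply cond_pos| lra]).
  exists (mkposreal _ Hm). intros k Hk Hk2. simpl in Hk2.
  rewrite <- (Heq (t + k)), <- (Heq t).
  - apply Hdel; auto. apply Rlt_le_trans with (1 := Hk2); apply Rmin_l.
  - rewrite Rminus_diag, Rabs_R0; lra.
  - replace (t + k - t) with k by ring. apply Rlt_le_trans with (1 := Hk2); apply Rmin_r.
Qed.

Lemma dpl_cont g t l : derivable_pt_lim g t l ->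
  forall e, 0 < e -> exists d, 0 < d /\ forall k, Rabs k < d -> Rabs (g (t + k) - g t) < e.
Proof.
  intros H e He.
  destruct (H 1 Rlt_0_1) as [del Hdel].
  assert (Hl : 0 < Rabs l + 1) by (pose proof (Rabs_pos l); lra).
  exists (Rmin del (e / (Rabs l + 1))). split.
  { apply Rmin_pos; [apply cond_pos| apply Rdiv_lt_0_compat; lra]. }
  intros k Hk.
  destruct (Req_dec k 0) as [->|Hk0].
  { rewrite Rplus_0_r, Rminus_diag, Rabs_R0; lra. }
  assert (Hk1 : Rabs k < del) by (apply Rlt_le_trans with (1 := Hk); apply Rmin_l).
  assert (Hk2 : Rabs k < e / (Rabs l + 1)) by (apply Rlt_le_trans with (1 := Hk); apply Rmin_r).
  specialize (Hdel k Hk0 Hk1).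
  set (q := (g (t + k) - g t) / k) in *.
  assert (Hq : Rabs q < Rabs l + 1).
  { pose proof (Rabs_triang (q - l) l). replace (q - l + l) with q in H0 by ring. lra. }
  replace (g (t + k) - g t) with (q * k) by (unfold q; field; auto).
  rewrite Rabs_mult.
  apply Rle_lt_trans with ((Rabs l + 1) * Rabs k).
  { apply Rmult_le_compat_r; [apply Rabs_pos | lra]. }
  apply Rmult_lt_reg_l with (/ (Rabs l + 1)). apply Rinv_0_lt_compat; lra.
  rewrite <- Rmult_assoc, Rinv_l by lra. rewrite Rmult_1_l.
  unfold Rdiv in Hk2. lra.
Qed.

Lemma MVT_sym g g' x y :
  (forall c, Rmin x y <= c <= Rmax x y -> derivable_pt_lim g c (g' c)) ->
  exists c, Rmin x y <= c <= Rmax x y /\ g y - g x = g' c * (y - x).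
Proof.
  intros H.
  destruct (Rtotal_order x y) as [Hxy|[Hxy|Hxy]].
  - destruct (MVT_cor2 g g' x y Hxy) as [c [Hc1 Hc2]].
    { intros c Hc. apply H. rewrite Rmin_left, Rmax_right by lra. exact Hc. }
    exists c. rewrite Rmin_left, Rmax_right by lra. split; [lra | exact Hc1].
  - subst. exists y. rewrite Rmin_left, Rmax_left by lra. split; [lra | ring].
  - destruct (MVT_cor2 g g' y x Hxy) as [c [Hc1 Hc2]].
    { intros c Hc. apply H. rewrite Rmin_right, Rmax_left by lra. exact Hc. }
    exists c. rewrite Rmin_right, Rmax_left by lra. split; [lra | ].
    replace (g y - g x) with (- (g x - g y)) by ring. rewrite Hc1. ring.
Qed.

Definition box_ok (h : R -> R -> R) (a0 b0 d : R) : Prop :=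
  forall a b, Rabs (a - a0) < d -> Rabs (b - b0) < d ->
    derivable_pt_lim (fun s => h s b) a (p1 h a b) /\
    derivable_pt_lim (fun s => h a s) b (p2 h a b).

Lemma between_abs x y c : Rmin x y <= c <= Rmax x y -> Rabs (c - x) <= Rabs (y - x).
Proof. unfold Rmin, Rmax; intros H; destruct (Rle_dec x y); unfold Rabs;
  repeat destruct Rcase_abs; lra. Qed.

Lemma chi_lim h a0 b0 d (Hd : 0 < d) (Hb : box_ok h a0 b0 d)
  (Hc : cont2_at (p1 h) a0 b0) (a b : R -> R) t0 a' b' :
  a t0 = a0 -> b t0 = b0 -> derivable_pt_lim a t0 a' -> derivable_pt_lim b t0 b' ->
  derivable_pt_lim (fun t => h (a t) (b t) - h a0 (b t)) t0 (p1 h a0 b0 * a').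
Proof.
  intros Ha0 Hb0 Ha Hbd eps Heps.
  set (P := p1 h a0 b0).
  set (M := Rabs a' + 1).
  assert (HM : 0 < M) by (unfold M; pose proof (Rabs_pos a'); lra).
  assert (HP : 0 < Rabs P + 1) by (pose proof (Rabs_pos P); lra).
  destruct (Hc (eps / (2 * M))) as [d1 [Hd1 Hc1]].
  { apply Rdiv_lt_0_compat; lra. }
  set (dm := Rmin d d1).
  assert (Hdm : 0 < dm) by (apply Rmin_pos; lra).
  destruct (dpl_cont _ _ _ Ha dm Hdm) as [da [Hda Hca]].
  destruct (dpl_cont _ _ _ Hbd dm Hdm) as [db [Hdb Hcb]].
  set (e3 := Rmin 1 (eps / (2 * (Rabs P + 1)))).
  assert (He3 : 0 < e3) by (apply Rmin_pos; [lra | apply Rdiv_lt_0_compat; lra]).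
  destruct (Ha e3 He3) as [d3 Hd3].
  assert (HD : 0 < Rmin (Rmin da db) d3) by
    (apply Rmin_pos; [apply Rmin_pos; lra | apply cond_pos]).
  exists (mkposreal _ HD). intros k Hk0 Hk. simpl in Hk.
  assert (Hka : Rabs k < da) by
    (apply Rlt_le_trans with (1 := Hk); eapply Rle_trans; [apply Rmin_l | apply Rmin_l]).
  assert (Hkb : Rabs k < db) by
    (apply Rlt_le_trans with (1 := Hk); eapply Rle_trans; [apply Rmin_l | apply Rmin_r]).
  assert (Hk3 : Rabs k < d3) by (apply Rlt_le_trans with (1 := Hk); apply Rmin_r).
  specialize (Hca k Hka). specialize (Hcb k Hkb). specialize (Hd3 k Hk0 Hk3).
  rewrite Ha0 in Hca, Hd3. rewrite Hb0 in Hcb.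
  set (ak := a (t0 + k)) in *. set (bk := b (t0 + k)) in *.
  assert (Hdmd : dm <= d) by apply Rmin_l.
  assert (Hdmd1 : dm <= d1) by apply Rmin_r.
  destruct (MVT_sym (fun s => h s bk) (fun s => p1 h s bk) a0 ak) as [c [Hc' Hmvt]].
  { intros c Hcc. apply (Hb c bk).
    - pose proof (between_abs _ _ _ Hcc). lra.
    - lra. }
  assert (Hca' : Rabs (c - a0) < d1).
  { pose proof (between_abs _ _ _ Hc'). lra. }
  specialize (Hc1 c bk Hca' ltac:(lra)).
  rewrite Ha0, Hb0.
  replace ((h ak bk - h a0 bk - (h a0 b0 - h a0 b0)) / k)
     with (p1 h c bk * ((ak - a0) / k))
     by (simpl in Hmvt; rewrite Hmvt; field; auto).
  set (q := (ak - a0) / k) in *.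
  set (Q := p1 h c bk) in *.
  fold P in Hc1.
  assert (He31 : e3 <= 1) by apply Rmin_l.
  assert (He32 : e3 <= eps / (2 * (Rabs P + 1))) by apply Rmin_r.
  assert (Hq : Rabs q <= M).
  { pose proof (Rabs_triang (q - a') a'). replace (q - a' + a') with q in H by ring.
    unfold M; lra. }
  replace (Q * q - P * a') with ((Q - P) * q + P * (q - a')) by ring.
  eapply Rle_lt_trans. apply Rabs_triang. rewrite !Rabs_mult.
  assert (T1 : Rabs (Q - P) * Rabs q <= eps / (2 * M) * M).
  { apply Rmult_le_compat; try apply Rabs_pos; lra. }
  assert (T2 : Rabs P * Rabs (q - a') <= (Rabs P + 1) * (eps / (2 * (Rabs P + 1)))).
  { apply Rmult_le_compat; try apply Rabs_pos; lra. }
  assert (E1 : eps / (2 * M) * M = eps / 2) by (field; lra).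
  assert (E2 : (Rabs P + 1) * (eps / (2 * (Rabs P + 1))) = eps / 2) by (field; lra).
  assert (T3 : Rabs (Q - P) * Rabs q < eps / 2 \/ Rabs P * Rabs (q - a') < eps / 2).
  { left. apply Rle_lt_trans with (Rabs (Q - P) * M).
    apply Rmult_le_compat_l; [apply Rabs_pos | lra].
    apply Rmult_lt_reg_r with (/ M). apply Rinv_0_lt_compat; lra.
    rewrite Rmult_assoc, Rinv_r by lra.
    replace (eps / 2 * / M) with (eps / (2 * M)) by (field; lra). lra. }
  lra.
Qed.

Lemma dpl_ext g1 g2 t l : (forall u, g1 u = g2 u) -> derivable_pt_lim g1 t l -> derivable_pt_lim g2 t l.
Proof. intros E H. replace g2 with g1 by (apply functional_extensionality; auto). exact H. Qed.

Lemma chain2 h a0 b0 d (Hd : 0 < d) (Hb : box_ok h a0 b0 d)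
  (Hc : cont2_at (p1 h) a0 b0) (a b : R -> R) t0 a' b' :
  a t0 = a0 -> b t0 = b0 -> derivable_pt_lim a t0 a' -> derivable_pt_lim b t0 b' ->
  derivable_pt_lim (fun t => h (a t) (b t)) t0 (p1 h a0 b0 * a' + p2 h a0 b0 * b').
Proof.
  intros Ha0 Hb0 Ha Hbd.
  apply dpl_ext with (fun t => (h (a t) (b t) - h a0 (b t)) + h a0 (b t)).
  { intros; ring. }
  apply derivable_pt_lim_plus.
  - eapply chi_lim; eauto.
  - assert (H2 : derivable_pt_lim (fun s => h a0 s) (b t0) (p2 h a0 b0)).
    { rewrite Hb0. apply (Hb a0 b0); rewrite Rminus_diag, Rabs_R0; lra. }
    pose proof (derivable_pt_lim_comp b (fun s => h a0 s) t0 b' _ Hbd H2) as H3.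
    unfold comp in H3.
    exact H3.
Qed.

Lemma box_sub h a0 b0 d a1 b1 d1 : box_ok h a0 b0 d ->
  Rabs (a1 - a0) + d1 <= d -> Rabs (b1 - b0) + d1 <= d -> box_ok h a1 b1 d1.
Proof.
  intros H Ha Hb a b Ha' Hb'. apply H.
  - pose proof (Rabs_triang (a - a1) (a1 - a0)). replace (a - a1 + (a1 - a0)) with (a - a0) in H0 by ring. lra.
  - pose proof (Rabs_triang (b - b1) (b1 - b0)). replace (b - b1 + (b1 - b0)) with (b - b0) in H0 by ring. lra.
Qed.

Lemma chain2_2 h a0 b0 d (Hd : 0 < d)
  (B0 : box_ok h a0 b0 d) (B1 : box_ok (p1 h) a0 b0 d) (B2 : box_ok (p2 h) a0 b0 d)
  (C0 : forall a b, Rabs (a - a0) < d -> Rabs (b - b0) < d -> cont2_at (p1 h) a b)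
  (C1 : cont2_at (p1 (p1 h)) a0 b0) (C2 : cont2_at (p1 (p2 h)) a0 b0)
  (a b a1 b1 : R -> R) t0 a2 b2 e (He : 0 < e)
  (Hab : forall t, Rabs (t - t0) < e -> derivable_pt_lim a t (a1 t) /\ derivable_pt_lim b t (b1 t))
  (Ha2 : derivable_pt_lim a1 t0 a2) (Hb2 : derivable_pt_lim b1 t0 b2)
  (Ha0 : a t0 = a0) (Hb0 : b t0 = b0) :
  exists e', 0 < e' /\
   (forall t, Rabs (t - t0) < e' -> derivable_pt_lim (fun t => h (a t) (b t)) t
        (p1 h (a t) (b t) * a1 t + p2 h (a t) (b t) * b1 t)) /\
   derivable_pt_lim (fun t => p1 h (a t) (b t) * a1 t + p2 h (a t) (b t) * b1 t) t0
     ((p1 (p1 h) a0 b0 * a1 t0 + p2 (p1 h) a0 b0 * b1 t0) * a1 t0 + p1 h a0 b0 * a2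
      + ((p1 (p2 h) a0 b0 * a1 t0 + p2 (p2 h) a0 b0 * b1 t0) * b1 t0 + p2 h a0 b0 * b2)).
Proof.
  destruct (Hab t0) as [Da Db]. { rewrite Rminus_diag, Rabs_R0; lra. }
  assert (Hd2 : 0 < d / 2) by lra.
  destruct (dpl_cont _ _ _ Da _ Hd2) as [da [Hda Ca]].
  destruct (dpl_cont _ _ _ Db _ Hd2) as [db [Hdb Cb]].
  assert (He' : 0 < Rmin e (Rmin da db)) by (repeat apply Rmin_pos; lra).
  exists (Rmin e (Rmin da db)). split; [exact He'|]. split.
  - intros t Ht.
    assert (Hte : Rabs (t - t0) < e) by (apply Rlt_le_trans with (1 := Ht); apply Rmin_l).
    assert (Hta : Rabs (t - t0) < da) by (apply Rlt_le_trans with (1 := Ht);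
       eapply Rle_trans; [apply Rmin_r | apply Rmin_l]).
    assert (Htb : Rabs (t - t0) < db) by (apply Rlt_le_trans with (1 := Ht);
       eapply Rle_trans; [apply Rmin_r | apply Rmin_r]).
    specialize (Ca _ Hta). specialize (Cb _ Htb).
    replace (t0 + (t - t0)) with t in Ca, Cb by ring.
    rewrite Ha0 in Ca. rewrite Hb0 in Cb.
    destruct (Hab t Hte) as [Dat Dbt].
    apply (chain2 h (a t) (b t) (d / 2)); auto.
    + apply (box_sub h a0 b0 d); auto; lra.
    + apply C0; lra.
  - pose proof (chain2 (p1 h) a0 b0 d Hd B1 C1 a b t0 (a1 t0) (b1 t0) Ha0 Hb0 Da Db) as P1.
    pose proof (chain2 (p2 h) a0 b0 d Hd B2 C2 a b t0 (a1 t0) (b1 t0) Ha0 Hb0 Da Db) as P2.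
    pose proof (derivable_pt_lim_plus _ _ _ _ _ (derivable_pt_lim_mult _ _ _ _ _ P1 Ha2)
                 (derivable_pt_lim_mult _ _ _ _ _ P2 Hb2)) as P.
    eapply dpl_ext; [| match type of P with derivable_pt_lim _ _ ?v =>
       replace (_ + _) with v; [exact P|] end].
    + intro u; reflexivity.
    + rewrite Ha0, Hb0. ring.
Qed.

Lemma upd_upd x i t s : upd (upd x i t) i s = upd x i (t + s).
Proof. apply functional_extensionality; intro k. unfold upd.
  destruct (Nat.eqb k i); ring. Qed.

Lemma dpl_shift g t l : derivable_pt_lim g t l -> derivable_pt_lim (fun s => g (t + s)) 0 l.
Proof. intros H eps He. destruct (H eps He) as [d Hd]. exists d. intros k Hk Hk2.
  replace (t + (0 + k)) with (t + k) by ring. rewrite Rplus_0_r. auto. Qed.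

Lemma dd_eq phi phi1 r L d : 0 < d ->
  (forall s, Rabs (s - r) < d -> derivable_pt_lim phi s (phi1 s)) ->
  derivable_pt_lim phi1 r L -> deriv (fun s => deriv phi s) r = L.
Proof.
  intros Hd H1 H2. apply deriv_eq. apply dpl_local with phi1 d; auto.
  intros t' Ht'. symmetry. apply deriv_eq. auto.
Qed.

Lemma d2_eq (Hf : Oct -> R) x i phi phi1 L d : 0 < d ->
  (forall t, Rabs t < d -> Hf (upd x i t) = phi t) ->
  (forall t, Rabs t < d -> derivable_pt_lim phi t (phi1 t)) ->
  derivable_pt_lim phi1 0 L -> Defs.d2 i Hf x = L.
Proof.
  intros Hd E H1 H2. unfold Defs.d2. apply deriv_eq. apply dpl_local with phi1 d; auto.
  intros t' Ht'. rewrite Rminus_0_r in Ht'. symmetry. apply deriv_eq.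
  replace (fun s => Hf (upd (upd x i t') i s)) with (fun s => Hf (upd x i (t' + s)))
    by (apply functional_extensionality; intro; rewrite upd_upd; reflexivity).
  apply dpl_local with (fun s => phi (t' + s)) (d - Rabs t'); [lra| |].
  - intros s Hs. rewrite Rminus_0_r in Hs. symmetry. apply E.
    pose proof (Rabs_triang t' s). lra.
  - apply dpl_shift. auto.
Qed.

Definition smooth_box f a0 b0 d := forall ws,
  box_ok (iterp ws f) a0 b0 d /\
  forall a b, Rabs (a - a0) < d -> Rabs (b - b0) < d -> cont2_at (iterp ws f) a b.

Lemma smooth_box_of f r0 e0' :
  smooth_on (fun rho eta => 0 < rho < 1 /\ 0 < eta < PI) f ->
  0 < r0 < 1 -> 0 < e0' < PI -> exists d, 0 < d /\ smooth_box f r0 e0' d.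
Proof.
  intros Hs Hr He.
  set (d := Rmin (Rmin r0 (1 - r0)) (Rmin e0' (PI - e0'))).
  assert (Hd : 0 < d) by (unfold d; repeat apply Rmin_pos; lra).
  assert (D1 : d <= r0) by (unfold d; eapply Rle_trans; [apply Rmin_l|apply Rmin_l]).
  assert (D2 : d <= 1 - r0) by (unfold d; eapply Rle_trans; [apply Rmin_l|apply Rmin_r]).
  assert (D3 : d <= e0') by (unfold d; eapply Rle_trans; [apply Rmin_r|apply Rmin_l]).
  assert (D4 : d <= PI - e0') by (unfold d; eapply Rle_trans; [apply Rmin_r|apply Rmin_r]).
  exists d; split; [exact Hd|]. intros ws.
  assert (IN : forall a b, Rabs (a - r0) < d -> Rabs (b - e0') < d ->
     0 < a < 1 /\ 0 < b < PI).
  { intros a b Ha Hb. apply Rabs_def2 in Ha. apply Rabs_def2 in Hb. split; lra. }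
  split.
  - intros a b Ha Hb. destruct (Hs ws a b (IN a b Ha Hb)) as [[l1 H1] [[l2 H2] _]].
    split.
    + unfold p1. rewrite (deriv_eq _ _ _ H1). exact H1.
    + unfold p2. rewrite (deriv_eq _ _ _ H2). exact H2.
  - intros a b Ha Hb. apply (Hs ws a b (IN a b Ha Hb)).
Qed.

Definition V2 (f : R -> R -> R) a0 b0 a1 b1 a2 b2 :=
  (p1 (p1 f) a0 b0 * a1 + p2 (p1 f) a0 b0 * b1) * a1 + p1 f a0 b0 * a2
  + ((p1 (p2 f) a0 b0 * a1 + p2 (p2 f) a0 b0 * b1) * b1 + p2 f a0 b0 * b2).

Lemma comp2 f a0 b0 d (Hd : 0 < d) (S : smooth_box f a0 b0 d)
  (a b a1 b1 : R -> R) t0 a2 b2 e (He : 0 < e)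
  (Hab : forall t, Rabs (t - t0) < e -> derivable_pt_lim a t (a1 t) /\ derivable_pt_lim b t (b1 t))
  (Ha2 : derivable_pt_lim a1 t0 a2) (Hb2 : derivable_pt_lim b1 t0 b2)
  (Ha0 : a t0 = a0) (Hb0 : b t0 = b0) :
  exists e', 0 < e' /\
   (forall t, Rabs (t - t0) < e' -> derivable_pt_lim (fun t => f (a t) (b t)) t
        (p1 f (a t) (b t) * a1 t + p2 f (a t) (b t) * b1 t)) /\
   derivable_pt_lim (fun t => p1 f (a t) (b t) * a1 t + p2 f (a t) (b t) * b1 t) t0
     (V2 f a0 b0 (a1 t0) (b1 t0) a2 b2).
Proof.
  apply (chain2_2 f a0 b0 d Hd) with e; auto.
  - exact (proj1 (S nil)).
  - exact (proj1 (S (true :: nil))).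
  - exact (proj1 (S (false :: nil))).
  - exact (proj2 (S (true :: nil))).
  - apply (proj2 (S (true :: true :: nil))); rewrite Rminus_diag, Rabs_R0; lra.
  - apply (proj2 (S (true :: false :: nil))); rewrite Rminus_diag, Rabs_R0; lra.
Qed.

Lemma d2_comp f a0 b0 d (Hd : 0 < d) (S : smooth_box f a0 b0 d)
  (a b a1 b1 : R -> R) a2 b2 e (He : 0 < e)
  (Hab : forall t, Rabs t < e -> derivable_pt_lim a t (a1 t) /\ derivable_pt_lim b t (b1 t))
  (Ha2 : derivable_pt_lim a1 0 a2) (Hb2 : derivable_pt_lim b1 0 b2)
  (Ha0 : a 0 = a0) (Hb0 : b 0 = b0) (Hf : Oct -> R) x i
  (E : forall t, Rabs t < e -> Hf (upd x i t) = f (a t) (b t)) :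
  Defs.d2 i Hf x = V2 f a0 b0 (a1 0) (b1 0) a2 b2.
Proof.
  destruct (comp2 f a0 b0 d Hd S a b a1 b1 0 a2 b2 e He) as [e' [He' [D1 D2]]]; auto.
  { intros t Ht. rewrite Rminus_0_r in Ht. auto. }
  apply d2_eq with (fun t => f (a t) (b t))
     (fun t => p1 f (a t) (b t) * a1 t + p2 f (a t) (b t) * b1 t) (Rmin e e'); auto.
  - apply Rmin_pos; lra.
  - intros t Ht. apply E. apply Rlt_le_trans with (1 := Ht); apply Rmin_l.
  - intros t Ht. apply D1. rewrite Rminus_0_r. apply Rlt_le_trans with (1 := Ht); apply Rmin_r.
Qed.

Ltac side := repeat (match goal with
 | |- _ /\ _ => split
 | |- True => exact I
 | |- ?a <> 0 => apply Rgt_not_eq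
 | |- _ ^ _ > 0 => apply pow_lt
 | |- 0 < _ ^ _ => apply pow_lt
 | |- sqrt _ > 0 => apply sqrt_lt_R0
 | |- 0 < sqrt _ => apply sqrt_lt_R0
 | |- _ * _ > 0 => apply Rmult_lt_0_compat
 | |- 0 < _ * _ => apply Rmult_lt_0_compat
 end); try lra.

Lemma dpl_ext_fun (g1 g2 : R -> R) t l : g1 = g2 -> derivable_pt_lim g1 t l -> derivable_pt_lim g2 t l.
Proof. intros ->; auto. Qed.

Definition Qf N q t := N + 2*q*t + t^2.

Lemma dX1 N q K t : 0 < Qf N q t -> K <> 0 ->
  derivable_pt_lim (fun t => sqrt (Qf N q t) / K) t ((q + t) / (K * sqrt (Qf N q t))).
Proof.
  intros HQ HK. apply is_derive_Reals. unfold Qf in *. auto_derive.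
  - replace (t * (t * 1)) with (t ^ 2) by ring. lra.
  - replace (t * (t * 1)) with (t ^ 2) by ring.
    assert (0 < sqrt (N + 2 * q * t + t ^ 2)) by (apply sqrt_lt_R0; lra).
    field. split; lra.
Qed.

Lemma dX2 N q K : 0 < N -> K <> 0 ->
  derivable_pt_lim (fun t => (q + t) / (K * sqrt (Qf N q t))) 0
    (1 / (K * sqrt N) - q^2 / (K * sqrt N ^ 3)).
Proof.
  intros HN HK. apply is_derive_Reals. unfold Qf in *. auto_derive.
  - replace (N + 2 * q * 0 + 0 * (0 * 1)) with N by ring. repeat split; try lra.
    apply Rmult_integral_contrapositive; split; auto. apply Rgt_not_eq, sqrt_lt_R0; lra.
  - replace (N + 2 * q * 0 + 0 * (0 * 1)) with N by ring.
    assert (0 < sqrt N) by (apply sqrt_lt_R0; lra).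
    field. split; lra.
Qed.

Lemma sqrt_pos' x : 0 < x -> 0 < sqrt x.
Proof. apply sqrt_lt_R0. Qed.

Lemma dY1 N q K t : 0 < Qf N q t ->
  derivable_pt_lim (fun t => K / sqrt (Qf N q t)) t (- K * (q + t) / sqrt (Qf N q t) ^ 3).
Proof.
  intros HQ. apply is_derive_Reals. unfold Qf in *. auto_derive.
  - replace (t * (t * 1)) with (t ^ 2) by ring. side.

  - replace (t * (t * 1)) with (t ^ 2) by ring.
    assert (0 < sqrt (N + 2 * q * t + t ^ 2)) by (apply sqrt_pos'; lra).
    field. lra.
Qed.

Lemma dY2 N q K : 0 < N ->
  derivable_pt_lim (fun t => - K * (q + t) / sqrt (Qf N q t) ^ 3) 0
    (- K / sqrt N ^ 3 + 3 * K * q^2 / sqrt N ^ 5).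
Proof.
  intros HN. apply is_derive_Reals. unfold Qf in *. auto_derive.
  - replace (N + 2 * q * 0 + 0 * (0 * 1)) with N by ring. side.
  - replace (N + 2 * q * 0 + 0 * (0 * 1)) with N by ring.
    assert (0 < sqrt N) by (apply sqrt_pos'; lra).
    field. lra.
Qed.

Definition cF p d N q t := (p + d * t) / sqrt (Qf N q t).
Definition cF1 p d N q t := d / sqrt (Qf N q t) - (p + d * t) * (q + t) / sqrt (Qf N q t) ^ 3.

Lemma dC1 p d N q t : 0 < Qf N q t -> derivable_pt_lim (cF p d N q) t (cF1 p d N q t).
Proof.
  intros HQ. apply is_derive_Reals. unfold cF, cF1, Qf in *. auto_derive.
  - replace (t * (t * 1)) with (t ^ 2) by ring. side.

  - replace (t * (t * 1)) with (t ^ 2) by ring.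
    assert (0 < sqrt (N + 2 * q * t + t ^ 2)) by (apply sqrt_pos'; lra).
    field. lra.
Qed.

Lemma dacos x : -1 < x < 1 -> derivable_pt_lim acos x (-1 / sqrt (1 - x^2)).
Proof.
  intros H. apply (derive_pt_eq_1 _ _ _ (derivable_pt_acos x H)).
  rewrite derive_pt_acos. unfold Rsqr. replace (x^2) with (x*x) by ring. reflexivity.
Qed.

Definition bF1 p d N q t := - cF1 p d N q t / sqrt (1 - cF p d N q t ^ 2).

Lemma dB1 p d N q t : 0 < Qf N q t -> -1 < cF p d N q t < 1 ->
  derivable_pt_lim (fun t => acos (cF p d N q t)) t (bF1 p d N q t).
Proof.
  intros HQ Hc.
  pose proof (derivable_pt_lim_comp _ acos t _ _ (dC1 p d N q t HQ) (dacos _ Hc)) as H.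
  unfold comp in H. unfold bF1. replace (- cF1 p d N q t / sqrt (1 - cF p d N q t ^ 2))
    with (-1 / sqrt (1 - cF p d N q t ^ 2) * cF1 p d N q t) by (unfold Rdiv; ring). exact H.
Qed.

Lemma dB2 p d N q : 0 < N -> -1 < p / sqrt N < 1 ->
  derivable_pt_lim (bF1 p d N q) 0
   (let S := sqrt N in let c := p / S in let W := sqrt (1 - c^2) in
    let c1 := d / S - p * q / S^3 in
    let c2 := -2 * d * q / S^3 - p / S^3 + 3 * p * q^2 / S^5 in
    - c2 / W - c * c1^2 / W^3).
Proof.
  intros HN Hc. apply is_derive_Reals. unfold bF1, cF1, cF, Qf in *. auto_derive.
  - replace (N + 2 * q * 0 + 0 * (0 * 1)) with N by ring.
    replace (p + d * 0) with p by ring.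
    assert (0 < sqrt N) by (apply sqrt_pos'; lra).
    assert (0 < 1 - (p / sqrt N) ^ 2) by nra.
    assert (0 < sqrt (1 - (p / sqrt N) ^ 2)) by (apply sqrt_pos'; lra).
    replace (p / sqrt N * ((p / sqrt N) * 1)) with ((p / sqrt N)^2) by ring.
    side.
  - replace (N + 2 * q * 0 + 0 * (0 * 1)) with N by ring.
    replace (p + d * 0) with p by ring.
    assert (0 < sqrt N) by (apply sqrt_pos'; lra).
    assert (0 < 1 - (p / sqrt N) ^ 2) by nra.
    assert (0 < sqrt (1 - (p / sqrt N) ^ 2)) by (apply sqrt_pos'; lra).
    replace (p / sqrt N * ((p / sqrt N) * 1)) with ((p / sqrt N)^2) by ring.
    cbv zeta.
    replace (1 + - (p * / sqrt N * (p * / sqrt N * 1))) with (1 - (p / sqrt N)^2) by (unfold Rdiv; ring).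
    set (W := sqrt (1 - (p / sqrt N) ^ 2)) in *. set (S := sqrt N) in *.
    field. lra.
Qed.

Lemma cosh_pos' x : 0 < cosh x.
Proof. unfold cosh. pose proof (exp_pos x). pose proof (exp_pos (-x)). lra. Qed.

Lemma cosh_sinh x : cosh x ^ 2 - sinh x ^ 2 = 1.
Proof. unfold cosh, sinh. rewrite exp_Ropp. pose proof (exp_pos x). field. lra. Qed.

Lemma dT1 t : derivable_pt_lim tanh t (1 / cosh t ^ 2).
Proof.
  pose proof (derivable_pt_lim_div _ _ t _ _ (derivable_pt_lim_sinh t) (derivable_pt_lim_cosh t)
     (Rgt_not_eq _ _ (cosh_pos' t))) as H.
  replace (1 / cosh t ^ 2) with ((cosh t * cosh t - sinh t * sinh t) / (cosh t)²).
  - eapply dpl_ext_fun; [| exact H]. reflexivity.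
  - pose proof (cosh_sinh t). pose proof (cosh_pos' t). unfold Rsqr.
    replace (cosh t * cosh t - sinh t * sinh t) with 1 by (simpl in H0; lra). field. lra.
Qed.

Lemma dT2 r : derivable_pt_lim (fun t => 1 / cosh t ^ 2) r (-2 * sinh r / cosh r ^ 3).
Proof.
  assert (G : derivable_pt_lim (fun u => 1 / u ^ 2) (cosh r) (-2 / cosh r ^ 3)).
  { pose proof (cosh_pos' r). apply is_derive_Reals. auto_derive.
    - side.
    - field. lra. }
  pose proof (derivable_pt_lim_comp _ _ r _ _ (derivable_pt_lim_cosh r) G) as H.
  unfold comp in H. replace (-2 * sinh r / cosh r ^ 3) with (-2 / cosh r ^ 3 * sinh r)
    by (unfold Rdiv; ring). exact H.
Qed.

Lemma sqrt_sq a : 0 <= a -> sqrt (a ^ 2) = a.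
Proof. intros H. rewrite pow2_sqr_alt. apply (sqrt_Rsqr a H). Qed.

Lemma sqrt_sq_mul a b : 0 <= a -> 0 <= b -> sqrt (a ^ 2 * b) = a * sqrt b.
Proof. intros Ha Hb. rewrite sqrt_mult by (try apply pow2_ge_0; auto). rewrite sqrt_sq; auto. Qed.

Lemma onorm_sq x : onorm x ^ 2 = onorm2 x.
Proof. unfold onorm. rewrite pow2_sqr_alt, sqrt_sqrt; auto. apply n2_nonneg. Qed.

Lemma oscale_clean c x : oscale c (clean x) = oscale c x.
Proof. kcases. Qed.

Lemma clean_0 x : clean x 0%nat = x 0%nat.
Proof. reflexivity. Qed.

Lemma charF Y (f : R -> R -> R) (F : Oct -> Oct -> R) (HY : orthonormal_frame_at_e0 Y)
  (HF : forall w th, onorm w < 1 -> thnorm th < PI ->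
        F (psi_x Y w th) (psi_y Y w th) = f (onorm w) (thnorm th))
  x' y' : onorm2 x' - onorm2 y' = -1 -> -1 < y' 0%nat / onorm y' < 1 ->
  F (clean x') (clean y') = f (onorm x' / onorm y') (acos (y' 0%nat / onorm y')).
Proof.
  intros Hads Hc.
  set (N := onorm y').
  assert (HN2 : N ^ 2 = onorm2 y') by apply onorm_sq.
  pose proof (n2_nonneg x') as Hx0.
  assert (HN : 0 < N).
  { assert (0 <= N) by apply sqrt_pos. destruct (Req_dec N 0); [|lra].
    rewrite H0 in HN2. lra. }
  set (u := oscale (/ N) y').
  assert (Hu : onorm2 u = 1) by (unfold u; rewrite n2_scale, <- HN2; field; lra).
  assert (Hu0 : u 0%nat = y' 0%nat / N) by (unfold u, oscale; rewrite clean_0; unfold Rdiv; ring).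
  destruct (expS7_inv Y HY u Hu ltac:(rewrite Hu0; exact Hc)) as [th [Hth Hexp]].
  set (w := oscale (/ N) (omul (oconj u) x')).
  assert (Hw : onorm2 w = onorm2 x' / N ^ 2).
  { unfold w. rewrite n2_scale, n2_mul, n2_conj, Hu. field. lra. }
  assert (Hw1 : onorm w < 1).
  { unfold onorm. rewrite <- sqrt_1. apply sqrt_lt_1_alt. split; [apply n2_nonneg|].
    rewrite Hw. apply Rmult_lt_reg_r with (N ^ 2). apply pow_lt; lra.
    unfold Rdiv. rewrite Rmult_assoc, Rinv_l, Rmult_1_r, Rmult_1_l by (apply pow_nonzero; lra). lra. }
  assert (Hthpi : thnorm th < PI).
  { rewrite Hth. apply acos_bound_lt. rewrite Hu0. exact Hc. }
  pose proof (HF w th Hw1 Hthpi) as E.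
  assert (HA : / sqrt (1 - onorm2 w) = N).
  { replace (1 - onorm2 w) with ((/ N) ^ 2).
    - rewrite sqrt_sq. field; lra. apply Rlt_le, Rinv_0_lt_compat; lra.
    - rewrite Hw. replace (onorm2 x') with (N ^ 2 - 1) by lra. field. lra. }
  assert (Ey : psi_y Y w th = clean y').
  { unfold psi_y. rewrite HA, Hexp, oscale_clean. unfold u. rewrite oscale_oscale.
    replace (N * / N) with 1 by (field; lra). apply oscale_1. }
  assert (Ex : psi_x Y w th = clean x').
  { unfold psi_x. rewrite HA, Hexp, omul_clean_l. unfold w. rewrite omul_scale_r.
    rewrite mul_conj_l, Hu, !oscale_oscale. replace (N * / N * 1) with 1 by (field; lra).
    apply oscale_1. }
  rewrite Ex, Ey in E. rewrite E, Hth, Hu0. f_equal.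
  unfold onorm at 1. rewrite Hw. unfold Rdiv. rewrite Rmult_comm.
  replace (onorm2 x' * / N ^ 2) with ((/ N) ^ 2 * onorm2 x') by (field; lra).
  replace (/ N ^ 2) with ((/ N) ^ 2) by (field; lra). rewrite sqrt_sq_mul; [ | apply Rlt_le, Rinv_0_lt_compat; lra | apply n2_nonneg]. unfold onorm; ring.
Qed.

Lemma onorm_def z : onorm z = sqrt (onorm2 z).
Proof. reflexivity. Qed.

Lemma n2_smul s x : onorm2 (fun k => s * x k) = s ^ 2 * onorm2 x.
Proof. unfold onorm2. cbv [rsum]. ring. Qed.

Lemma onorm_smul s x : 0 <= s -> onorm (fun k => s * x k) = s * onorm x.
Proof. intros Hs. unfold onorm. rewrite n2_smul. apply sqrt_sq_mul; auto. apply n2_nonneg. Qed.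

Lemma onorm_pos x : 0 < onorm2 x -> 0 < onorm x.
Proof. intros H. unfold onorm. apply sqrt_lt_R0; auto. Qed.

Lemma homog_char Y (f : R -> R -> R) (F : Oct -> Oct -> R) (HY : orthonormal_frame_at_e0 Y)
  (HF : forall w th, onorm w < 1 -> thnorm th < PI ->
        F (psi_x Y w th) (psi_y Y w th) = f (onorm w) (thnorm th))
  x' y' : 0 < onorm2 y' - onorm2 x' -> -1 < y' 0%nat / onorm y' < 1 ->
  homog F x' y' = f (onorm x' / onorm y') (acos (y' 0%nat / onorm y')).
Proof.
  intros Hp Hc. unfold homog. set (s := / sqrt (onorm2 y' - onorm2 x')).
  assert (Hs : 0 < s) by (apply Rinv_0_lt_compat, sqrt_lt_R0; auto).
  assert (Hs2 : s ^ 2 = / (onorm2 y' - onorm2 x')).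
  { unfold s. rewrite <- Rinv_pow by (apply Rgt_not_eq, sqrt_lt_R0; auto).
    rewrite pow2_sqr_alt, sqrt_sqrt; auto; lra. }
  pose proof (n2_nonneg x').
  assert (Hy : 0 < onorm y') by (apply onorm_pos; lra).
  unfold oscale. rewrite (charF Y f F HY HF).
  - rewrite !onorm_smul by lra. f_equal.
    + field; lra.
    + f_equal. field; lra.
  - rewrite !n2_smul. replace (s ^ 2 * onorm2 x' - s ^ 2 * onorm2 y') with (- (s ^ 2 * (onorm2 y' - onorm2 x'))) by ring.
    rewrite Hs2. field. lra.
  - rewrite onorm_smul by lra. replace (s * y' 0%nat / (s * onorm y')) with (y' 0%nat / onorm y') by (field; lra).
    auto.
Qed.

Lemma vert_char Y (f : R -> R -> R) (F : Oct -> Oct -> R) (HY : orthonormal_frame_at_e0 Y)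
  (HF : forall w th, onorm w < 1 -> thnorm th < PI ->
        F (psi_x Y w th) (psi_y Y w th) = f (onorm w) (thnorm th))
  x y v : onorm2 x - onorm2 y = -1 -> 0 < onorm2 v -> -1 < v 0%nat / onorm v < 1 ->
  F (oscale (onorm y) (omul (oscale (/ onorm v) v) (omul (oinv y) x)))
    (oscale (onorm y) (oscale (/ onorm v) v)) =
  f (onorm x / onorm y) (acos (v 0%nat / onorm v)).
Proof.
  intros Hads Hv Hc.
  pose proof (n2_nonneg x).
  assert (Hy2 : 0 < onorm2 y) by lra.
  assert (Hy : 0 < onorm y) by (apply onorm_pos; lra).
  assert (Hvn : 0 < onorm v) by (apply onorm_pos; lra).
  assert (Hvh : onorm2 (oscale (/ onorm v) v) = 1).
  { rewrite n2_scale. rewrite <- onorm_sq. field. lra. }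
  assert (Hvh1 : onorm (oscale (/ onorm v) v) = 1) by (rewrite (onorm_def (oscale _ _)), Hvh; apply sqrt_1).
  assert (Hmul1 : onorm (omul (oscale (/ onorm v) v) (omul (oinv y) x)) = onorm x / onorm y).
  { rewrite (onorm_def (omul _ _)). rewrite n2_mul, Hvh, n2_mul, n2_oinv by lra. rewrite Rmult_1_l.
    rewrite sqrt_mult by (try apply Rlt_le, Rinv_0_lt_compat; auto; apply n2_nonneg).
    rewrite sqrt_inv. fold (onorm y) (onorm x). field. lra. }
  change (F (clean (fun k => onorm y * omul (oscale (/ onorm v) v) (omul (oinv y) x) k))
            (clean (fun k => onorm y * oscale (/ onorm v) v k)) =
          f (onorm x / onorm y) (acos (v 0%nat / onorm v))).
  rewrite (charF Y f F HY HF).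
  - rewrite !onorm_smul by lra. rewrite Hvh1, Hmul1. f_equal.
    + field. lra.
    + f_equal. unfold oscale, clean. simpl. field. lra.
  - rewrite (n2_smul (onorm y) (omul _ _)), (n2_smul (onorm y) (oscale _ _)), n2_mul, Hvh, n2_mul, n2_oinv by lra. rewrite <- (onorm_sq y). rewrite <- (onorm_sq y) in Hads. field_simplify; lra.
  - rewrite onorm_smul by lra. rewrite Hvh1.
    replace (onorm y * oscale (/ onorm v) v 0%nat / (onorm y * 1)) with (v 0%nat / onorm v).
    + auto.
    + unfold oscale, clean. simpl. field. lra.
Qed.

Lemma near_in g l lo hi : derivable_pt_lim g 0 l -> lo < g 0 < hi ->
  exists e, 0 < e /\ forall t, Rabs t < e -> lo < g t < hi.
Proof.
  intros H Hg. destruct (dpl_cont g 0 l H (Rmin (g 0 - lo) (hi - g 0))) as [e [He He']].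
  { apply Rmin_pos; lra. }
  exists e; split; auto. intros t Ht. specialize (He' t Ht). rewrite Rplus_0_l in He'.
  apply Rabs_def2 in He'. pose proof (Rmin_l (g 0 - lo) (hi - g 0)). pose proof (Rmin_r (g 0 - lo) (hi - g 0)). lra.
Qed.

Lemma dQf N q t : derivable_pt_lim (Qf N q) t (2 * q + 2 * t).
Proof. apply is_derive_Reals. unfold Qf. auto_derive; auto. ring. Qed.

Lemma n2_upd x i t : (i < 8)%nat -> onorm2 (upd x i t) = Qf (onorm2 x) (x i) t.
Proof. intros Hi. unfold onorm2, upd, Qf.
  do 8 (destruct i as [|i]; [cbv [rsum Nat.eqb]; ring|]). lia. Qed.

Lemma upd_0 x i t : upd x i t 0%nat = x 0%nat + kron i 0 * t.
Proof. unfold upd, kron. destruct i; simpl; ring. Qed.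

Lemma rsum_quad (z : Oct) al be ga ep :
  rsum 8 (fun i => al + be * z i ^ 2 + ga * (kron i 0 * z i) + ep * kron i 0 ^ 2)
  = 8 * al + be * onorm2 z + ga * z 0%nat + ep.
Proof. unfold onorm2. cbv [rsum kron Nat.eqb]. ring. Qed.

Lemma Qf0 N q : Qf N q 0 = N.
Proof. unfold Qf. ring. Qed.

Lemma part1 f r0 e0' d (Hd : 0 < d) (S : smooth_box f r0 e0' d)
  (H : Oct -> R) (x : Oct) K (HK : 0 < K) (HN : 0 < onorm2 x)
  (Hr : onorm x / K = r0)
  (Hloc : forall i, (i < 8)%nat -> exists e, 0 < e /\ forall t, Rabs t < e ->
      H (upd x i t) = f (onorm (upd x i t) / K) e0') :
  lapR8 H x = p1 (p1 f) r0 e0' / K ^ 2 + 7 * p1 f r0 e0' / (K * onorm x).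
Proof.
  set (R := onorm x).
  assert (HR : 0 < R) by (apply onorm_pos; auto).
  assert (HR2 : R ^ 2 = onorm2 x) by apply onorm_sq.
  unfold lapR8.
  rewrite (rsum_ext 8 _ (fun i => p1 f r0 e0' / (K * R)
        + (p1 (p1 f) r0 e0' / (K ^ 2 * R ^ 2) - p1 f r0 e0' / (K * R ^ 3)) * x i ^ 2
        + 0 * (kron i 0 * x i) + 0 * kron i 0 ^ 2)).
  - rewrite rsum_quad. rewrite <- HR2. field. lra.
  - intros i Hi. destruct (Hloc i Hi) as [e1 [He1 E1]].
    destruct (near_in (Qf (onorm2 x) (x i)) _ 0 (onorm2 x + 1) (dQf _ _ 0)) as [e2 [He2 E2]].
    { rewrite Qf0. lra. }
    set (N := onorm2 x). set (q := x i).
    rewrite (d2_comp f r0 e0' d Hd S (fun t => sqrt (Qf N q t) / K) (fun _ => e0')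
        (fun t => (q + t) / (K * sqrt (Qf N q t))) (fun _ => 0)
        (1 / (K * sqrt N) - q^2 / (K * sqrt N ^ 3)) 0 (Rmin e1 e2)).
    + unfold V2. rewrite Qf0. fold R. unfold N. rewrite <- HR2. rewrite sqrt_sq by lra.
      field. lra.
    + apply Rmin_pos; lra.
    + intros t Ht. split.
      * apply dX1; [|apply Rgt_not_eq; lra]. apply E2. eapply Rlt_le_trans; [exact Ht| apply Rmin_r].
      * apply derivable_pt_lim_const.
    + apply dX2; [unfold N; lra | apply Rgt_not_eq; lra].
    + apply derivable_pt_lim_const.
    + simpl. rewrite Qf0. rewrite <- Hr. reflexivity.
    + reflexivity.
    + intros t Ht. rewrite E1 by (eapply Rlt_le_trans; [exact Ht| apply Rmin_l]).
      unfold onorm. rewrite n2_upd by auto. reflexivity.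
Qed.

Lemma dY1c c0 N q K t : 0 < Qf N q t ->
  derivable_pt_lim (fun t => c0 + K / sqrt (Qf N q t)) t (- K * (q + t) / sqrt (Qf N q t) ^ 3).
Proof.
  intros HQ. pose proof (derivable_pt_lim_plus _ _ t _ _ (derivable_pt_lim_const c0 t) (dY1 N q K t HQ)) as H.
  eapply dpl_ext; [| replace (- K * (q + t) / sqrt (Qf N q t) ^ 3) with (0 + - K * (q + t) / sqrt (Qf N q t) ^ 3) by ring; exact H].
  intro u; reflexivity.
Qed.

Lemma part2 f r0 e0' d (Hd : 0 < d) (S : smooth_box f r0 e0' d)
  (H : Oct -> R) (y : Oct) c0 K (HN : 0 < onorm2 y)
  (Hc : -1 < y 0%nat / onorm y < 1)
  (Hr : c0 + K / onorm y = r0) (He : acos (y 0%nat / onorm y) = e0')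
  (Hloc : forall i, (i < 8)%nat -> exists e, 0 < e /\ forall t, Rabs t < e ->
      H (upd y i t) = f (c0 + K / onorm (upd y i t)) (acos (upd y i t 0%nat / onorm (upd y i t)))) :
  let R := onorm y in let p := y 0%nat in let W := sqrt (1 - (p / R) ^ 2) in
  lapR8 H y = p1 (p1 f) r0 e0' * K ^ 2 / R ^ 4 - 5 * p1 f r0 e0' * K / R ^ 3
     + p2 (p2 f) r0 e0' / R ^ 2 + 6 * p2 f r0 e0' * p / (R ^ 3 * W).
Proof.
  intros R p W.
  assert (HR : 0 < R) by (apply onorm_pos; auto).
  assert (HR2 : R ^ 2 = onorm2 y) by apply onorm_sq.
  assert (Hc' : -1 < p / R < 1) by exact Hc.
  assert (HW2 : W ^ 2 = 1 - (p / R) ^ 2).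
  { unfold W. rewrite pow2_sqr_alt, sqrt_sqrt; auto. nra. }
  assert (HW : 0 < W) by (apply sqrt_lt_R0; nra).
  set (F11 := p1 (p1 f) r0 e0'). set (F21 := p2 (p1 f) r0 e0'). set (F12 := p1 (p2 f) r0 e0').
  set (F22 := p2 (p2 f) r0 e0'). set (F1 := p1 f r0 e0'). set (F2 := p2 f r0 e0').
  set (be := F11 * K^2 / R^6 - (F12 + F21) * K * p / (R^6 * W) + 3 * F1 * K / R^5
             + F22 * p^2 / (W^2 * R^6) + F2 * (-3 * p / (R^5 * W) - p^3 / (R^7 * W^3))).
  set (ga := (F12 + F21) * K / (R^4 * W) - 2 * p * F22 / (W^2 * R^4)
             + F2 * (2 / (R^3 * W) + 2 * p^2 / (R^5 * W^3))).
  set (al := - F1 * K / R^3 + F2 * p / (R^3 * W)).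
  set (ep := F22 / (W^2 * R^2) - F2 * p / (R^3 * W^3)).
  unfold lapR8.
  rewrite (rsum_ext 8 _ (fun i => al + be * y i ^ 2 + ga * (kron i 0 * y i) + ep * kron i 0 ^ 2)).
  - rewrite rsum_quad. fold p. rewrite <- HR2.
    match goal with |- ?L = ?Rr =>
      assert (X : L - Rr = (F22 / (W^2 * R^2) - F2 * p / (R^3 * W^3)) * ((1 - (p / R)^2) - W^2))
        by (unfold al, be, ga, ep; field; lra) end.
    rewrite HW2 in X. lra.
  - intros i Hi. destruct (Hloc i Hi) as [e1 [He1 E1]].
    set (N := onorm2 y). set (q := y i). set (dd := kron i 0).
    assert (HN' : 0 < N) by exact HN.
    destruct (near_in (Qf N q) _ 0 (N + 1) (dQf _ _ 0)) as [e2 [He2 E2]].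
    { rewrite Qf0. lra. }
    destruct (near_in (cF p dd N q) _ (-1) 1 (dC1 p dd N q 0 ltac:(rewrite Qf0; lra))) as [e3 [He3 E3]].
    { unfold cF. rewrite Qf0. replace (p + dd * 0) with p by ring. exact Hc. }
    assert (Hee : 0 < Rmin e1 (Rmin e2 e3)) by (repeat apply Rmin_pos; lra).
    rewrite (d2_comp f r0 e0' d Hd S (fun t => c0 + K / sqrt (Qf N q t)) (fun t => acos (cF p dd N q t))
        (fun t => - K * (q + t) / sqrt (Qf N q t) ^ 3) (bF1 p dd N q)
        (- K / sqrt N ^ 3 + 3 * K * q^2 / sqrt N ^ 5)
        (let S := sqrt N in let c := p / S in let W := sqrt (1 - c^2) in
         let c1 := dd / S - p * q / S^3 in
         let c2 := -2 * dd * q / S^3 - p / S^3 + 3 * p * q^2 / S^5 in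
         - c2 / W - c * c1^2 / W^3) (Rmin e1 (Rmin e2 e3))).
    + unfold V2. fold F11 F21 F12 F22 F1 F2. unfold bF1, cF1, cF. rewrite !Qf0.
      replace (p + dd * 0) with p by ring. replace (sqrt N) with R by reflexivity.
      fold W. cbv zeta. fold W. unfold dd. unfold al, be, ga, ep. field. lra.
    + exact Hee.
    + intros t Ht.
      assert (Ht2 : Rabs t < e2) by (eapply Rlt_le_trans; [exact Ht|]; eapply Rle_trans; [apply Rmin_r|apply Rmin_l]).
      assert (Ht3 : Rabs t < e3) by (eapply Rlt_le_trans; [exact Ht|]; eapply Rle_trans; [apply Rmin_r|apply Rmin_r]).
      split.
      * apply dY1c. apply E2; auto.
      * apply dB1; [apply E2 | apply E3]; auto.
    + apply dY2; lra.
    + apply dB2; [lra|]. unfold cF in Hc. exact Hc.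
    + simpl. rewrite Qf0. rewrite <- Hr. reflexivity.
    + simpl. unfold cF. rewrite Qf0. replace (p + dd * 0) with p by ring. exact He.
    + intros t Ht. rewrite E1 by (eapply Rlt_le_trans; [exact Ht| apply Rmin_l]).
      unfold onorm. rewrite n2_upd, upd_0 by auto. reflexivity.
Qed.

Theorem proposition1 :
  forall (Y : nat -> Oct) (f : R -> R -> R) (F : Oct -> Oct -> R),
    orthonormal_frame_at_e0 Y ->
    smooth_on (fun rho eta => 0 < rho < 1 /\ 0 < eta < PI) f ->
    (exists d, 0 < d /\ forall rho eta, 0 <= rho < 1 -> 0 <= eta < PI ->
        (1 - d < rho \/ PI - d < eta) -> f rho eta = 0) ->
    (forall (w : Oct) (th : nat -> R), onorm w < 1 -> thnorm th < PI ->
        F (psi_x Y w th) (psi_y Y w th) = f (onorm w) (thnorm th)) ->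
    forall (r eta : R) (w : Oct) (th : nat -> R),
      0 < r -> 0 < eta < PI ->
      onorm w = tanh r -> thnorm th = eta ->
      let g := fun r' eta' => f (tanh r') eta' in
      subL F (psi_x Y w th) (psi_y Y w th) =
        deriv (fun s => deriv (fun t => g t eta) s) r
        + (7 * (cosh r / sinh r) + 7 * tanh r) * deriv (fun t => g t eta) r
        + (tanh r) ^ 2 *
          ( deriv (fun s => deriv (fun t => g r t) s) eta
            + 6 * (cos eta / sin eta) * deriv (fun t => g r t) eta ).
Proof.
  intros Y f F HY Hsm _ HF r eta w th Hr Heta Hw Hth. cbv beta zeta.
  set (ch := cosh r). set (sh := sinh r).
  assert (Hch : 0 < ch) by apply cosh_pos'.
  assert (Hsh : 0 < sh) by (unfold sh; rewrite <- sinh_0; apply sinh_lt; lra).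
  assert (Hcs : ch ^ 2 - sh ^ 2 = 1) by apply cosh_sinh.
  assert (Htanh : tanh r = sh / ch) by reflexivity.
  set (r0 := tanh r).
  assert (Hr0 : 0 < r0 < 1).
  { unfold r0; rewrite Htanh. split; [apply Rdiv_lt_0_compat; lra|].
    apply Rmult_lt_reg_r with ch; auto. field_simplify; [|lra]. nra. }
  set (c := cos eta). set (s := sin eta).
  assert (Hs : 0 < s) by (apply sin_gt_0; lra).
  assert (Hsc : s ^ 2 + c ^ 2 = 1) by (unfold s, c; pose proof (sin2_cos2 eta); unfold Rsqr in H; nra).
  assert (Hc1 : -1 < c < 1) by nra.
  assert (Hacos : acos c = eta) by (apply acos_cos; lra).
  destruct (smooth_box_of f r0 eta Hsm Hr0 Heta) as [d [Hd S]].
  set (E := expS7 Y th).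
  assert (HE : onorm2 E = 1) by (apply n2_expS7; auto; lra).
  assert (HE0 : E 0%nat = c) by (unfold E, c; rewrite (expS7_0 Y HY), Hth; reflexivity).
  assert (Hw2 : onorm2 w = r0 ^ 2) by (rewrite <- onorm_sq, Hw; reflexivity).
  assert (HA : / sqrt (1 - onorm2 w) = ch).
  { rewrite Hw2. unfold r0. rewrite Htanh.
    assert (Eq : 1 - (sh / ch) ^ 2 = (ch ^ 2 - sh ^ 2) * (/ ch) ^ 2) by (field; lra). rewrite Hcs, Rmult_1_l in Eq. rewrite Eq.
    rewrite sqrt_sq; [field; lra| apply Rlt_le, Rinv_0_lt_compat; lra]. }
  set (x := psi_x Y w th). set (y := psi_y Y w th).
  assert (Hy : y = oscale ch E) by (unfold y, psi_y; rewrite HA; reflexivity).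
  assert (Hx : x = oscale ch (omul E w)) by (unfold x, psi_x; rewrite HA; reflexivity).
  assert (Hy2 : onorm2 y = ch ^ 2) by (rewrite Hy, n2_scale, HE; ring).
  assert (Hx2 : onorm2 x = sh ^ 2).
  { rewrite Hx, n2_scale, n2_mul, HE, Hw2. unfold r0; rewrite Htanh. field. lra. }
  assert (Hyn : onorm y = ch) by (unfold onorm; rewrite Hy2; apply sqrt_sq; lra).
  assert (Hxn : onorm x = sh) by (unfold onorm; rewrite Hx2; apply sqrt_sq; lra).
  assert (Hy0 : y 0%nat = ch * c) by (rewrite Hy; unfold oscale, clean; simpl; rewrite HE0; reflexivity).
  assert (Hyc : y 0%nat / onorm y = c) by (rewrite Hy0, Hyn; field; lra).
  assert (Hads : onorm2 x - onorm2 y = -1) by (rewrite Hx2, Hy2; lra).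
  assert (HyP : 0 < onorm y) by lra.
  assert (HxP : 0 < onorm2 x) by (rewrite Hx2; nra).
  set (F11 := p1 (p1 f) r0 eta). set (F21 := p2 (p1 f) r0 eta). set (F12 := p1 (p2 f) r0 eta).
  set (F22 := p2 (p2 f) r0 eta). set (F1 := p1 f r0 eta). set (F2 := p2 f r0 eta).
  assert (P1 : lapR8 (fun x' => homog F x' y) x = F11 / ch ^ 2 + 7 * F1 / (ch * sh)).
  { rewrite (part1 f r0 eta d Hd S _ x (onorm y) HyP HxP).
    - rewrite Hyn, Hxn. reflexivity.
    - rewrite Hxn, Hyn. unfold r0. rewrite Htanh. reflexivity.
    - intros i Hi.
      destruct (near_in (Qf (onorm2 x) (x i)) _ (-1) (onorm2 x + 1) (dQf _ _ 0)) as [e [He E1]].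
      { rewrite Qf0; lra. }
      exists e; split; auto. intros t Ht. specialize (E1 t Ht).
      rewrite (homog_char Y f F HY HF).
      + rewrite Hyc, Hacos. reflexivity.
      + rewrite n2_upd by auto. lra.
      + rewrite Hyc; auto. }
  assert (P2 : lapR8 (fun y' => homog F x y') y =
     F11 * sh ^ 2 / ch ^ 4 - 5 * F1 * sh / ch ^ 3 + F22 / ch ^ 2 + 6 * F2 * (ch * c) / (ch ^ 3 * s)).
  { assert (HyN : 0 < onorm2 y) by (rewrite Hy2; nra).
    pose proof (part2 f r0 eta d Hd S (fun y' => homog F x y') y 0 (onorm x) HyN
       ltac:(rewrite Hyc; auto) ltac:(rewrite Hxn, Hyn; unfold r0; rewrite Htanh; ring)
       ltac:(rewrite Hyc; auto)) as P.
    cbv zeta in P. rewrite P.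
    - rewrite Hyn, Hxn, Hy0. replace (ch * c / ch) with c by (field; lra).
      replace (1 - c ^ 2) with (s ^ 2) by lra. rewrite sqrt_sq by lra. reflexivity.
    - intros i Hi.
      destruct (near_in (Qf (onorm2 y) (y i)) _ (onorm2 x) (onorm2 y + 1) (dQf _ _ 0)) as [e2 [He2 E2]].
      { rewrite Qf0; lra. }
      destruct (near_in (cF (y 0%nat) (kron i 0) (onorm2 y) (y i)) _ (-1) 1
          (dC1 _ (kron i 0) (onorm2 y) (y i) 0 ltac:(rewrite Qf0; lra))) as [e3 [He3 E3]].
      { unfold cF. rewrite Qf0. replace (y 0%nat + kron i 0 * 0) with (y 0%nat) by ring.
        fold (onorm y). rewrite Hyc. auto. }
      exists (Rmin e2 e3); split; [apply Rmin_pos; lra|]. intros t Ht.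
      assert (Ht2 : Rabs t < e2) by (eapply Rlt_le_trans; [exact Ht| apply Rmin_l]).
      assert (Ht3 : Rabs t < e3) by (eapply Rlt_le_trans; [exact Ht| apply Rmin_r]).
      specialize (E2 t Ht2). specialize (E3 t Ht3).
      rewrite (homog_char Y f F HY HF).
      + rewrite Rplus_0_l. reflexivity.
      + rewrite n2_upd by auto. lra.
      + unfold onorm. rewrite n2_upd, upd_0 by auto. exact E3. }
  set (u0 := oscale (/ onorm y) y).
  assert (Hu2 : onorm2 u0 = 1) by (unfold u0; rewrite n2_scale, <- onorm_sq; field; lra).
  assert (Hun : onorm u0 = 1) by (unfold onorm; rewrite Hu2; apply sqrt_1).
  assert (Hu0 : u0 0%nat = c) by (unfold u0, oscale, clean; simpl; rewrite <- Hyc; unfold Rdiv; ring).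
  assert (P3 : lapR8 (fun v => F (oscale (onorm y) (omul (oscale (/ onorm v) v) (omul (oinv y) x)))
                  (oscale (onorm y) (oscale (/ onorm v) v))) u0 = F22 + 6 * F2 * c / s).
  { pose proof (part2 f r0 eta d Hd S (fun v => F (oscale (onorm y) (omul (oscale (/ onorm v) v) (omul (oinv y) x)))
                  (oscale (onorm y) (oscale (/ onorm v) v))) u0 (onorm x / onorm y) 0
       ltac:(rewrite Hu2; lra) ltac:(rewrite Hu0, Hun; lra)
       ltac:(rewrite Hxn, Hyn, Hun; unfold r0; rewrite Htanh; field; lra)
       ltac:(rewrite Hu0, Hun, Rdiv_1_r; auto)) as P.
    cbv zeta in P. rewrite P.
    - rewrite Hun, Hu0, Rdiv_1_r. replace (1 - c ^ 2) with (s ^ 2) by lra. rewrite sqrt_sq by lra.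
      unfold F22, F2. field. lra.
    - intros i Hi.
      destruct (near_in (Qf (onorm2 u0) (u0 i)) _ 0 2 (dQf _ _ 0)) as [e2 [He2 E2]].
      { rewrite Qf0; lra. }
      destruct (near_in (cF (u0 0%nat) (kron i 0) (onorm2 u0) (u0 i)) _ (-1) 1
          (dC1 _ (kron i 0) (onorm2 u0) (u0 i) 0 ltac:(rewrite Qf0; lra))) as [e3 [He3 E3]].
      { unfold cF. rewrite Qf0. replace (u0 0%nat + kron i 0 * 0) with (u0 0%nat) by ring.
        fold (onorm u0). rewrite Hun, Hu0, Rdiv_1_r. auto. }
      exists (Rmin e2 e3); split; [apply Rmin_pos; lra|]. intros t Ht.
      assert (Ht2 : Rabs t < e2) by (eapply Rlt_le_trans; [exact Ht| apply Rmin_l]).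
      assert (Ht3 : Rabs t < e3) by (eapply Rlt_le_trans; [exact Ht| apply Rmin_r]).
      specialize (E2 t Ht2). specialize (E3 t Ht3).
      rewrite (vert_char Y f F HY HF x y (upd u0 i t) Hads).
      + replace (0 / onorm (upd u0 i t)) with 0 by (unfold Rdiv; ring). rewrite Rplus_0_r. reflexivity.
      + rewrite n2_upd by auto. lra.
      + unfold onorm. rewrite n2_upd, upd_0 by auto. exact E3. }
  assert (B0 := proj1 (S nil)). simpl iterp in B0.
  assert (C0 : cont2_at (p1 f) r0 eta) by (apply (proj2 (S (true :: nil))); rewrite Rminus_diag, Rabs_R0; lra).
  assert (R1 : deriv (fun t => f (tanh t) eta) r = F1 * (1 / ch ^ 2)).
  { apply deriv_eq.
    pose proof (chain2 f r0 eta d Hd B0 C0 tanh (fun _ => eta) r (1 / cosh r ^ 2) 0 eq_refl eq_refl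
      (dT1 r) (derivable_pt_lim_const eta r)) as P.
    replace (F1 * (1 / ch ^ 2)) with (p1 f r0 eta * (1 / cosh r ^ 2) + p2 f r0 eta * 0) by (unfold F1, ch; ring).
    exact P. }
  assert (R2 : deriv (fun s => deriv (fun t => f (tanh t) eta) s) r = F11 * (1 / ch ^ 2) ^ 2 + F1 * (-2 * sh / ch ^ 3)).
  { destruct (comp2 f r0 eta d Hd S tanh (fun _ => eta) (fun t => 1 / cosh t ^ 2) (fun _ => 0) r
       (-2 * sinh r / cosh r ^ 3) 0 1 Rlt_0_1) as [e' [He' [D1 D2]]].
    { intros t _. split; [apply dT1 | apply derivable_pt_lim_const]. }
    { apply dT2. } { apply derivable_pt_lim_const. } { reflexivity. } { reflexivity. }
    apply (dd_eq _ _ r _ e' He' D1). unfold V2 in D2.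
    replace (F11 * (1 / ch ^ 2) ^ 2 + F1 * (-2 * sh / ch ^ 3)) with
      ((p1 (p1 f) r0 eta * (1 / cosh r ^ 2) + p2 (p1 f) r0 eta * 0) * (1 / cosh r ^ 2) +
        p1 f r0 eta * (-2 * sinh r / cosh r ^ 3) +
        ((p1 (p2 f) r0 eta * (1 / cosh r ^ 2) + p2 (p2 f) r0 eta * 0) * 0 + p2 f r0 eta * 0))
      by (unfold F11, F1, ch, sh; ring).
    exact D2. }
  change (deriv (fun t => f r0 t) eta) with F2.
  change (deriv (fun s0 => deriv (fun t => f r0 t) s0) eta) with F22.
  rewrite R1, R2.
  unfold subL, dalembert, vertlap, lapS7. cbv zeta. rewrite P1, P2. change (oscale (/ onorm y) y) with u0. rewrite P3.
  fold c s. unfold r0. rewrite Htanh. fold ch sh.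
  match goal with |- ?L = ?Rr =>
    assert (X : L - Rr = (F11 / ch ^ 4 + F22 / ch ^ 2 + 6 * F2 * c / (s * ch ^ 2)) * (ch ^ 2 - sh ^ 2 - 1))
      by (field; repeat split; lra) end.
  rewrite Hcs in X. lra.
Qed.
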